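(* Let $\boldsymbol{M}$ be a weight sequence such that $\widetilde{\boldsymbol{M}}$ is almost increasing, and let $\boldsymbol{A}$ be either an almost increasing sequence, or a sequence such that $\liminf_{p\to\infty}A_p^{1/p}>0$ and $\widehat{\boldsymbol{A}}$ satisfies $\operatorname{(alg)}$. Then: (i) $\mathcal{F}\colon\mathcal{S}^{\{\widehat{\boldsymbol{A}}\}}_{\{\boldsymbol{M}\}}(\mathbb{R})\to\mathcal{S}^{\{\widetilde{\boldsymbol{M}}\}}_{\{\widehat{\boldsymbol{A}}\}}(\mathbb{R})$ is (well-defined and) continuous, and the same holds at the level of Banach spaces with a uniform scaling of $h$: there exists $a>0$ such that for every $h\ge1$, $\mathcal{F}$ maps $\mathcal{S}^{\widehat{\boldsymbol{A}},h}_{\boldsymbol{M},h}(\mathbb{R})$ continuously into $\mathcal{S}^{\widetilde{\boldsymbol{M}},ah}_{\widehat{\boldsymbol{A}},ah}(\mathbb{R})$. (ii) Statement (i) is also valid for $\mathcal{F}^{-1}$.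
   Context: Sequences are of positive reals indexed by $\mathbb{N}_0$; $m_p=M_{p+1}/M_p$. Weight sequence: $M_0=1$, $M_p^2\le M_{p-1}M_{p+1}$ ($p\ge1$), $m_p\to\infty$. $\widetilde{\boldsymbol{M}}=(\widetilde M_p)_p$ with $\widetilde M_p=M_{p+1}\log(e^2m_{p+1}/m_p)$. Almost increasing: $c_p\le ac_q$ for all $q\ge p$, some $a>0$. $\operatorname{(alg)}$ for $\boldsymbol{N}$: $N_pN_q\le C_1^{p+q}N_{p+q}$ for all $p,q$, some $C_1\ge1$. $\widehat{\boldsymbol{A}}=(p!A_p)_p$. For sequences $\boldsymbol{N},\boldsymbol{B}$ and $h>0$, $\mathcal{S}^{\boldsymbol{B},h}_{\boldsymbol{N},h}(\mathbb{R})$ is the Banach space of $\varphi\in C^\infty(\mathbb{R})$ with norm $\sup_{p,q}\sup_{x\in\mathbb{R}}|x^p\varphi^{(q)}(x)|/(h^{p+q}N_pB_q)$, and $\mathcal{S}^{\{\boldsymbol{B}\}}_{\{\boldsymbol{N}\}}(\mathbb{R})=\bigcup_h$ of these with inductive limit topology. $\mathcal{F}(\varphi)(\xi)=\int_{\mathbb{R}}\varphi(x)e^{ix\xi}\,dx$, $\mathcal{F}^{-1}(\varphi)(\xi)=\frac1{2\pi}\mathcal{F}(\varphi)(-\xi)$. *)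

(* Defs.v *)
From Stdlib Require Import Reals Factorial.
From Coquelicot Require Export Coquelicot.
Open Scope R_scope.

Definition quot (M : nat -> R) (p : nat) : R := M (S p) / M p.

Definition weight_sequence (M : nat -> R) : Prop :=
  (forall p, 0 < M p) /\
  M 0%nat = 1 /\
  (forall p, (1 <= p)%nat -> M p ^ 2 <= M (p - 1)%nat * M (S p)) /\
  is_lim_seq (quot M) p_infty.

Definition Mtilde (M : nat -> R) (p : nat) : R :=
  M (S p) * ln (exp 2 * quot M (S p) / quot M p).

Definition Ahat (A : nat -> R) (p : nat) : R := INR (fact p) * A p.

Definition almost_increasing (c : nat -> R) : Prop :=
  exists a, 0 < a /\ forall p q, (p <= q)%nat -> c p <= a * c q.

Definition alg (N : nat -> R) : Prop :=
  exists C1, 1 <= C1 /\ forall p q, N p * N q <= C1 ^ (p + q) * N (p + q)%nat.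

Definition liminf_root_pos (A : nat -> R) : Prop :=
  Rbar_lt (Finite 0) (LimInf_seq (fun p => Rpower (A p) (/ INR p))).

Definition cderiv (phi : R -> C) (q : nat) (x : R) : C :=
  (Derive_n (fun t => fst (phi t)) q x, Derive_n (fun t => snd (phi t)) q x).

Definition smooth (phi : R -> C) : Prop :=
  forall q x, ex_derive_n (fun t => fst (phi t)) q x /\
              ex_derive_n (fun t => snd (phi t)) q x.

Definition bounded_by (N B : nat -> R) (h : R) (phi : R -> C) (K : R) : Prop :=
  forall p q x, Cmod (Cmult (RtoC (x ^ p)) (cderiv phi q x)) <= K * (h ^ (p + q) * N p * B q).

Definition in_S (N B : nat -> R) (h : R) (phi : R -> C) : Prop :=
  smooth phi /\ exists K, bounded_by N B h phi K.

(** phi belongs to S^{B}_{N}(R) (Roumieu type: union over h > 0) *)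
Definition in_S_union (N B : nat -> R) (phi : R -> C) : Prop :=
  exists h, 0 < h /\ in_S N B h phi.

Definition expi (t : R) : C := (cos t, sin t).

Definition fourier_int (phi : R -> C) (xi : R) (l : C) : Prop :=
  is_RInt_gen (fun x => Cmult (phi x) (expi (x * xi))) (Rbar_locally m_infty) (Rbar_locally p_infty) l.

Definition is_fourier (phi psi : R -> C) : Prop :=
  forall xi, fourier_int phi xi (psi xi).

Definition is_inv_fourier (phi psi : R -> C) : Prop :=
  forall xi, exists l, fourier_int phi (- xi) l /\ psi xi = Cmult (RtoC (/ (2 * PI))) l.

(** The transform T (given as a relation phi |-> psi) is well-defined from
    S^{B1}_{N1} into S^{B2}_{N2} and continuous for the inductive limit
    topologies: each step S^{B1,h}_{N1,h} is mapped by a bounded linear map into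
    some step S^{B2,k}_{N2,k}. *)
Definition maps_continuously_LB (T : (R -> C) -> (R -> C) -> Prop)
  (N1 B1 N2 B2 : nat -> R) : Prop :=
  (forall phi, in_S_union N1 B1 phi ->
     exists psi, T phi psi /\ in_S_union N2 B2 psi) /\
  (forall h, 0 < h -> exists k K, 0 < k /\ 0 <= K /\
     forall phi, in_S N1 B1 h phi ->
       exists psi, T phi psi /\ in_S N2 B2 k psi /\
         forall C0, bounded_by N1 B1 h phi C0 -> bounded_by N2 B2 k psi (K * C0)).

Definition maps_continuously_banach (T : (R -> C) -> (R -> C) -> Prop)
  (N1 B1 N2 B2 : nat -> R) : Prop :=
  exists a, 0 < a /\ forall h, 1 <= h -> exists K, 0 <= K /\
     forall phi, in_S N1 B1 h phi ->
       exists psi, T phi psi /\ in_S N2 B2 (a * h) psi /\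
         forall C0, bounded_by N1 B1 h phi C0 -> bounded_by N2 B2 (a * h) psi (K * C0).

(* Main.v *)
Require Import Defs.
From Stdlib Require Import Reals Factorial Lra Lia Psatz.
From Coquelicot Require Import Coquelicot.
Open Scope R_scope.

Lemma normR (x : R) : norm x = Rabs x.
Proof. reflexivity. Qed.

Lemma ballR (x eps y : R) : ball x eps y <-> Rabs (y - x) < eps.
Proof. reflexivity. Qed.

Lemma cont_of_der (f : R -> R) x : ex_derive f x -> continuous f x.
Proof. intro H. exact (@ex_derive_continuous R_AbsRing R_NormedModule f x H). Qed.

Lemma is_RInt_inv2 (c2 u v : R) : 0 < u -> u <= v ->
  is_RInt (fun x => c2 / x^2) u v (c2/u - c2/v).
Proof.
  intros Hu Huv.
  replace (c2/u - c2/v) with (minus ((fun x => - c2 / x) v) ((fun x => - c2/x) u)).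
  2:{ unfold minus, plus, opp; simpl. field; lra. }
  apply (is_RInt_derive (V := R_CompleteNormedModule) (fun x => - c2 / x)).
  - intros x Hx. rewrite Rmin_left in Hx by lra. rewrite Rmax_right in Hx by lra.
    auto_derive; [lra| field; lra].
  - intros x Hx. rewrite Rmin_left in Hx by lra. rewrite Rmax_right in Hx by lra.
    refine (cont_of_der _ _ _). auto_derive; intro HH; nra.
Qed.

Lemma is_RInt_inv2_neg (c2 u v : R) : v < 0 -> u <= v ->
  is_RInt (fun x => c2 / x^2) u v (c2/u - c2/v).
Proof.
  intros Hu Huv.
  replace (c2/u - c2/v) with (minus ((fun x => - c2 / x) v) ((fun x => - c2/x) u)).
  2:{ unfold minus, plus, opp; simpl. field; lra. }
  apply (is_RInt_derive (V := R_CompleteNormedModule) (fun x => - c2 / x)).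
  - intros x Hx. rewrite Rmin_left in Hx by lra. rewrite Rmax_right in Hx by lra.
    auto_derive; [lra| field; lra].
  - intros x Hx. rewrite Rmin_left in Hx by lra. rewrite Rmax_right in Hx by lra.
    refine (cont_of_der _ _ _). auto_derive; intro HH; nra.
Qed.


Lemma piece (f g : R -> R) u v lg : u <= v -> ex_RInt f u v ->
  (forall x, u <= x <= v -> Rabs (f x) <= g x) -> is_RInt g u v lg ->
  Rabs (RInt f u v) <= lg.
Proof.
  intros Huv Hf Hb Hg. rewrite <- normR.
  apply (norm_RInt_le f g u v (RInt f u v) lg Huv); auto.
  apply (RInt_correct (V := R_CompleteNormedModule)). exact Hf.
Qed.

Lemma le_div_sq (x c y : R) : x <> 0 -> x^2 * y <= c -> y <= c / x^2.
Proof.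
  intros Hx H. assert (0 < x^2) by (replace (x^2) with (Rsqr x) by (unfold Rsqr; ring); apply Rsqr_pos_lt; auto).
  apply (Rmult_le_reg_l (x^2)); auto. replace (x^2 * (c / x^2)) with c by (field; lra). lra.
Qed.

Lemma RInt_swap_abs (f : R -> R) u v : ex_RInt f u v -> Rabs (RInt f v u) = Rabs (RInt f u v).
Proof.
  intro H. rewrite <- (opp_RInt_swap (V := R_CompleteNormedModule) f u v H).
  unfold opp; simpl. apply Rabs_Ropp.
Qed.

Lemma tail_pos (f : R -> R) c2 T u v : (forall a b, ex_RInt f a b) ->
  (forall x, x^2 * Rabs (f x) <= c2) -> 0 < T -> T <= u -> T <= v ->
  Rabs (RInt f u v) <= c2 / T.
Proof.
  intros Hex Hb HT Hu Hv.
  assert (Hc2 : 0 <= c2). { specialize (Hb 0). pose proof (Rabs_pos (f 0)). simpl in Hb. nra. }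
  assert (key : forall u v, T <= u -> u <= v -> Rabs (RInt f u v) <= c2 / T).
  { clear u v Hu Hv. intros u v Hu Huv.
    eapply Rle_trans.
    - apply (piece f (fun x => c2 / x^2) u v); auto.
      + intros x Hx. apply le_div_sq; [lra| apply Hb].
      + apply is_RInt_inv2; lra.
    - assert (c2 / u <= c2 / T).
      { unfold Rdiv. apply Rmult_le_compat_l; auto. apply Rinv_le_contravar; lra. }
      assert (0 <= c2 / v) by (apply Rdiv_le_0_compat; lra). lra. }
  destruct (Rle_dec u v).
  - apply key; auto.
  - rewrite <- RInt_swap_abs by apply Hex. apply key; lra.
Qed.

Lemma tail_neg (f : R -> R) c2 T u v : (forall a b, ex_RInt f a b) ->
  (forall x, x^2 * Rabs (f x) <= c2) -> 0 < T -> u <= -T -> v <= -T ->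
  Rabs (RInt f u v) <= c2 / T.
Proof.
  intros Hex Hb HT Hu Hv.
  assert (Hc2 : 0 <= c2). { specialize (Hb 0). pose proof (Rabs_pos (f 0)). simpl in Hb. nra. }
  assert (key : forall u v, v <= -T -> u <= v -> Rabs (RInt f u v) <= c2 / T).
  { clear u v Hu Hv. intros u v Hv Huv.
    eapply Rle_trans.
    - apply (piece f (fun x => c2 / x^2) u v); auto.
      + intros x Hx. apply le_div_sq; [lra| apply Hb].
      + apply is_RInt_inv2_neg; lra.
    - assert (- (c2 / v) <= c2 / T).
      { replace (- (c2 / v)) with (c2 / (-v)) by (field; lra).
        unfold Rdiv. apply Rmult_le_compat_l; auto. apply Rinv_le_contravar; lra. }
      assert (0 <= - (c2 / u)).
      { replace (- (c2 / u)) with (c2 / (-u)) by (field; lra). apply Rdiv_le_0_compat; lra. }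
      lra. }
  destruct (Rle_dec u v).
  - apply key; auto.
  - rewrite <- RInt_swap_abs by apply Hex. apply key; lra.
Qed.

Notation FM := (Rbar_locally m_infty).
Notation FP := (Rbar_locally p_infty).

Lemma filterlim_RInt_gen (f : R -> R) l : (forall a b, ex_RInt f a b) ->
  filterlim (fun ab => RInt f (fst ab) (snd ab)) (filter_prod FM FP) (locally l) ->
  is_RInt_gen f FM FP l.
Proof.
  intros Hex H P HP. specialize (H P HP). unfold filtermap in H. unfold filtermapi.
  eapply filter_imp; [|exact H]. intros [a b] Hab. simpl in *.
  exists (RInt f a b). split; auto.
  apply (RInt_correct (V := R_CompleteNormedModule)). apply Hex.
Qed.

Lemma eventually_pair (P : R * R -> Prop) T :
  (forall a b, a < -T -> T < b -> P (a, b)) -> filter_prod FM FP P.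
Proof.
  intros H. apply (Filter_prod FM FP P (fun a => a < -T) (fun b => T < b)).
  - exists (-T). auto.
  - exists T. auto.
  - intros; apply H; auto.
Qed.

Lemma ex_gen (f : R -> R) c2 : (forall a b, ex_RInt f a b) ->
  (forall x, x^2 * Rabs (f x) <= c2) ->
  exists l, is_RInt_gen f FM FP l.
Proof.
  intros Hex Hb.
  assert (Hc2 : 0 <= c2). { specialize (Hb 0). pose proof (Rabs_pos (f 0)). simpl in Hb. nra. }
  assert (exists y, filterlim (fun ab => RInt f (fst ab) (snd ab)) (filter_prod FM FP) (locally y)) as [y Hy].
  { apply (filterlim_locally_closely (U := R_CompleteSpace)).
    intros P [eps HP]. unfold filtermap.
    set (T := 2 * (c2 + 1) / eps).
    assert (HT : 0 < T). { unfold T. apply Rdiv_lt_0_compat; [lra| apply cond_pos]. }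
    apply (Filter_prod _ _ _ (fun ab => fst ab < -T /\ T < snd ab) (fun ab => fst ab < -T /\ T < snd ab)).
    - apply eventually_pair with T. simpl; auto.
    - apply eventually_pair with T. simpl; auto.
    - intros [a b] [a' b'] [Ha Hb'] [Ha' Hb'']. simpl in *. apply HP.
      apply ballR.
      assert (E : RInt f a' b' = RInt f a' a + RInt f a b + RInt f b b').
      { rewrite <- (RInt_Chasles (V := R_CompleteNormedModule) f a' b b') by apply Hex.
        rewrite <- (RInt_Chasles (V := R_CompleteNormedModule) f a' a b) by apply Hex. reflexivity. }
      rewrite E.
      replace (RInt f a' a + RInt f a b + RInt f b b' - RInt f a b) with (RInt f a' a + RInt f b b') by ring.
      eapply Rle_lt_trans; [apply Rabs_triang|].
      pose proof (tail_neg f c2 T a' a Hex Hb HT ltac:(lra) ltac:(lra)).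
      pose proof (tail_pos f c2 T b b' Hex Hb HT ltac:(lra) ltac:(lra)).
      assert (2 * (c2 / T) < eps).
      { unfold T. replace (2 * (c2 / (2 * (c2 + 1) / eps))) with (eps * (c2 / (c2+1))).
        2:{ pose proof (cond_pos eps). field; repeat split; lra. }
        pose proof (cond_pos eps).
        assert (c2 / (c2+1) < 1).
        { unfold Rdiv. apply (Rmult_lt_reg_r (c2+1)); [lra|]. rewrite Rmult_assoc, Rinv_l by lra. lra. }
        nra. }
      lra. }
  exists y. apply filterlim_RInt_gen; auto.
Qed.

Lemma gen_bound (f : R -> R) l B T : is_RInt_gen f FM FP l ->
  (forall a b y, a < -T -> T < b -> is_RInt f a b y -> Rabs y <= B) -> Rabs l <= B.
Proof.
  intros Hl HB. destruct (Rle_dec (Rabs l) B) as [|Hn]; auto. exfalso.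
  assert (He : 0 < Rabs l - B) by lra.
  set (eps := mkposreal _ He).
  specialize (Hl (ball l eps) (locally_ball l eps)).
  unfold filtermapi in Hl.
  pose proof (filter_and _ _ Hl (eventually_pair (fun ab => fst ab < -T /\ T < snd ab) T ltac:(simpl; auto))) as H2.
  destruct (filter_ex _ H2) as [[a b] [[y [Hy Hb]] [Ha Hb2]]]. simpl in *.
  specialize (HB a b y Ha Hb2 Hy). assert (Hb' : Rabs (y - l) < Rabs l - B) by exact Hb.
  pose proof (Rabs_triang_inv l y). 
  replace (Rabs (y - l)) with (Rabs (l - y)) in Hb' by apply Rabs_minus_sym. lra.
Qed.

Lemma is_RInt_log1 (c R1 u : R) : 0 < R1 -> 0 <= u ->
  is_RInt (fun x => 2 * c / (x + R1)) 0 u (2 * c * (ln (u + R1) - ln R1)).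
Proof.
  intros H1 Hu.
  replace (2 * c * (ln (u + R1) - ln R1)) with
    (minus ((fun x => 2 * c * ln (x + R1)) u) ((fun x => 2 * c * ln (x + R1)) 0)).
  2:{ unfold minus, plus, opp; simpl. rewrite Rplus_0_l. ring. }
  apply (is_RInt_derive (V := R_CompleteNormedModule) (fun x => 2 * c * ln (x + R1))).
  - intros x Hx. rewrite Rmin_left in Hx by lra. rewrite Rmax_right in Hx by lra.
    auto_derive; [lra| field; lra].
  - intros x Hx. rewrite Rmin_left in Hx by lra. rewrite Rmax_right in Hx by lra.
    refine (cont_of_der _ _ _). auto_derive. lra.
Qed.

Lemma is_RInt_log2 (c R1 u : R) : 0 < R1 -> 0 <= u ->
  is_RInt (fun x => 2 * c / (R1 - x)) (-u) 0 (2 * c * (ln (u + R1) - ln R1)).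
Proof.
  intros H1 Hu.
  replace (2 * c * (ln (u + R1) - ln R1)) with
    (minus ((fun x => - (2 * c * ln (R1 - x))) 0) ((fun x => - (2 * c * ln (R1 - x))) (-u))).
  2:{ unfold minus, plus, opp; simpl. replace (R1 - 0) with R1 by ring. replace (R1 - - u) with (u + R1) by ring. ring. }
  apply (is_RInt_derive (V := R_CompleteNormedModule) (fun x => - (2 * c * ln (R1 - x)))).
  - intros x Hx. rewrite Rmin_left in Hx by lra. rewrite Rmax_right in Hx by lra.
    auto_derive; [lra| field; lra].
  - intros x Hx. rewrite Rmin_left in Hx by lra. rewrite Rmax_right in Hx by lra.
    refine (cont_of_der _ _ _). auto_derive. lra.
Qed.

Lemma ln2_lt_1 : ln 2 < 1.
Proof.
  rewrite <- ln_exp with 1. apply ln_increasing; [lra|].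
  pose proof (exp_ineq1 1 ltac:(lra)). lra.
Qed.

Lemma ln_bound (R1 R2 : R) : 0 < R1 -> R1 <= R2 ->
  ln (R2 + R1) - ln R1 <= 1 + ln (R2 / R1).
Proof.
  intros H1 H2. rewrite ln_div by lra.
  assert (ln (R2 + R1) <= ln (2 * R2)) by (apply ln_le; lra).
  rewrite ln_mult in H by lra. pose proof ln2_lt_1. lra.
Qed.

Lemma sharp (f : R -> R) c0 c1 c2 l : 0 < c0 -> 0 < c1 -> c1^2 <= c0 * c2 ->
  (forall x, Rabs (f x) <= c0) -> (forall x, Rabs x * Rabs (f x) <= c1) ->
  (forall x, x^2 * Rabs (f x) <= c2) -> (forall a b, ex_RInt f a b) ->
  is_RInt_gen f FM FP l -> Rabs l <= c1 * (6 + 4 * ln (c0 * c2 / c1^2)).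
Proof.
  intros H0 H1 H12 B0 B1 B2 Hex Hl.
  set (R1 := c1 / c0). set (R2 := c2 / c1).
  assert (HR1 : 0 < R1) by (unfold R1; apply Rdiv_lt_0_compat; lra).
  assert (HR12 : R1 <= R2).
  { unfold R1, R2. apply (Rmult_le_reg_r (c0 * c1)); [nra|].
    replace (c1 / c0 * (c0 * c1)) with (c1^2) by (field; lra).
    replace (c2 / c1 * (c0 * c1)) with (c0 * c2) by (field; lra). lra. }
  assert (Hrat : R2 / R1 = c0 * c2 / c1^2) by (unfold R1, R2; field; repeat split; lra).
  assert (Hc1R1 : R1 * c0 = c1) by (unfold R1; field; lra).
  assert (Hc2 : 0 < c2) by nra.
  assert (Hc2R2 : c2 / R2 = c1) by (unfold R2; field; repeat split; lra).
  apply (gen_bound f l _ R2 Hl). intros a b y Ha Hb Hy.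
  rewrite <- (is_RInt_unique f a b y Hy).
  assert (E : RInt f a b = RInt f a (-R2) + RInt f (-R2) 0 + RInt f 0 R2 + RInt f R2 b).
  { rewrite <- (RInt_Chasles (V := R_CompleteNormedModule) f a (-R2) b) by apply Hex.
    rewrite <- (RInt_Chasles (V := R_CompleteNormedModule) f (-R2) 0 b) by apply Hex.
    rewrite <- (RInt_Chasles (V := R_CompleteNormedModule) f 0 R2 b) by apply Hex.
    unfold plus; simpl. ring. }
  rewrite E.
  assert (P1 : Rabs (RInt f R2 b) <= c1).
  { eapply Rle_trans.
    - apply (piece f (fun x => c2 / x^2) R2 b); [lra|apply Hex| |apply is_RInt_inv2; lra].
      intros x Hx. apply le_div_sq; [lra| apply B2].
    - assert (0 <= c2 / b) by (apply Rdiv_le_0_compat; nra). lra. }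
  assert (P4 : Rabs (RInt f a (-R2)) <= c1).
  { eapply Rle_trans.
    - apply (piece f (fun x => c2 / x^2) a (-R2)); [lra|apply Hex| |apply is_RInt_inv2_neg; lra].
      intros x Hx. apply le_div_sq; [lra| apply B2].
    - assert (0 <= - (c2 / a)).
      { replace (- (c2 / a)) with (c2 / (-a)) by (field; lra). apply Rdiv_le_0_compat; nra. }
      replace (c2 / - R2) with (- (c2 / R2)) by (field; lra). lra. }
  assert (P2 : Rabs (RInt f 0 R2) <= 2 * c1 * (ln (R2 + R1) - ln R1)).
  { apply (piece f (fun x => 2 * c1 / (x + R1)) 0 R2); [lra|apply Hex| |apply is_RInt_log1; lra].
    intros x Hx. apply (Rmult_le_reg_l (x + R1)); [lra|].
    replace ((x + R1) * (2 * c1 / (x + R1))) with (2 * c1) by (field; lra).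
    specialize (B0 x). specialize (B1 x). rewrite Rabs_pos_eq in B1 by lra.
    pose proof (Rabs_pos (f x)).
    destruct (Rle_dec x R1); nra. }
  assert (P3 : Rabs (RInt f (-R2) 0) <= 2 * c1 * (ln (R2 + R1) - ln R1)).
  { apply (piece f (fun x => 2 * c1 / (R1 - x)) (-R2) 0); [lra|apply Hex| |apply is_RInt_log2; lra].
    intros x Hx. apply (Rmult_le_reg_l (R1 - x)); [lra|].
    replace ((R1 - x) * (2 * c1 / (R1 - x))) with (2 * c1) by (field; lra).
    specialize (B0 x). specialize (B1 x). rewrite Rabs_left1 in B1 by lra.
    pose proof (Rabs_pos (f x)).
    destruct (Rle_dec (-x) R1); nra. }
  pose proof (ln_bound R1 R2 HR1 HR12). rewrite Hrat in H.
  assert (T1 : forall A B C D : R, Rabs (A + B + C + D) <= Rabs A + Rabs B + Rabs C + Rabs D).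
  { intros. pose proof (Rabs_triang (A+B+C) D). pose proof (Rabs_triang (A+B) C).
    pose proof (Rabs_triang A B). lra. }
  eapply Rle_trans; [apply T1|].
  assert (2 * c1 * (ln (R2 + R1) - ln R1) <= 2 * c1 * (1 + ln (c0 * c2 / c1 ^ 2))) by (apply Rmult_le_compat_l; lra).
  lra.
Qed.
Lemma sin_near (a:R) : 0 <= a <= 2 -> a - a^3/6 <= sin a <= a.
Proof.
  intros Ha. destruct (pre_sin_bound a 0 ltac:(lra) ltac:(lra)) as [H1 H2].
  unfold sin_approx in H1, H2. simpl in H1, H2.
  unfold sin_term in H1, H2. simpl in H1, H2.
  assert (A1 : a - a^3/6 <= sin a) by (eapply Rle_trans; [|exact H1]; right; field).
  assert (A2 : sin a <= a - a^3/6 + a^5/120) by (eapply Rle_trans; [exact H2|]; right; field).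
  split; auto. assert (a^5/120 <= a^3/6).
  { assert (0 <= a^3) by (apply pow_le; lra).
    replace (a^5) with (a^3 * a^2) by ring. assert (a^2 <= 4) by nra. nra. }
  lra.
Qed.

Lemma abs_sin_le (u : R) : Rabs (sin u) <= Rabs u.
Proof.
  assert (K : forall u, 0 <= u -> Rabs (sin u) <= u).
  { intros v Hv. destruct (Rle_dec v 1).
    - destruct (sin_near v ltac:(lra)). rewrite Rabs_pos_eq; [lra|].
      assert (v^3 <= v) by (simpl; nra). lra.
    - pose proof (SIN_bound v). apply Rabs_le. lra. }
  destruct (Rle_dec 0 u).
  - rewrite (Rabs_pos_eq u) by lra. apply K; auto.
  - rewrite <- (Ropp_involutive u). rewrite sin_neg, Rabs_Ropp, Rabs_Ropp.
    rewrite (Rabs_pos_eq (-u)) by lra. apply K; lra.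
Qed.

Lemma cos_bound2 (b : R) : Rabs (cos b - 1) <= b^2 / 2.
Proof.
  replace b with (2 * (b/2)) at 1 by field. rewrite cos_2a_sin.
  pose proof (abs_sin_le (b/2)).
  assert (Rsqr (sin (b/2)) <= Rsqr (b/2)).
  { rewrite (Rsqr_abs (sin _)), (Rsqr_abs (b/2)). apply Rsqr_incr_1; auto; apply Rabs_pos. }
  unfold Rsqr in *. rewrite Rabs_left1.
  - replace (b^2/2) with (2 * (b/2 * (b/2))) by field. lra.
  - pose proof (Rle_0_sqr (sin (b/2))). unfold Rsqr in *. lra.
Qed.

Lemma sin_bound2 (b : R) : Rabs (sin b - b) <= b^2.
Proof.
  assert (K : forall b, 0 <= b -> Rabs (sin b - b) <= b^2).
  { intros v Hv. destruct (Rle_dec v 2).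
    - destruct (sin_near v ltac:(lra)). rewrite Rabs_left1 by lra.
      assert (v^3/6 <= v^2) by (simpl; nra). lra.
    - pose proof (SIN_bound v). apply Rabs_le. split; nra. }
  destruct (Rle_dec 0 b).
  - apply K; auto.
  - replace (sin b - b) with (- (sin (-b) - (-b))) by (rewrite sin_neg; ring).
    rewrite Rabs_Ropp. replace (b^2) with ((-b)^2) by ring. apply K; lra.
Qed.

Lemma abs_comb (x y A B : R) : Rabs x <= 1 -> Rabs y <= 1 ->
  Rabs (x * A + y * B) <= Rabs A + Rabs B.
Proof.
  intros Hx Hy. eapply Rle_trans; [apply Rabs_triang|]. rewrite !Rabs_mult.
  pose proof (Rabs_pos A). pose proof (Rabs_pos B). nra.
Qed.

Lemma cos_rem (a b : R) : Rabs (cos (a + b) - cos a + b * sin a) <= 2 * b^2.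
Proof.
  rewrite cos_plus.
  replace (cos a * cos b - sin a * sin b - cos a + b * sin a)
    with (cos a * (cos b - 1) + (- sin a) * (sin b - b)) by ring.
  pose proof (cos_bound2 b). pose proof (sin_bound2 b).
  pose proof (COS_bound a). pose proof (SIN_bound a).
  eapply Rle_trans; [apply abs_comb|].
  - apply Rabs_le; lra.
  - rewrite Rabs_Ropp. apply Rabs_le; lra.
  - pose proof (pow2_ge_0 b). lra.
Qed.

Lemma sin_rem (a b : R) : Rabs (sin (a + b) - sin a - b * cos a) <= 2 * b^2.
Proof.
  rewrite sin_plus.
  replace (sin a * cos b + cos a * sin b - sin a - b * cos a)
    with (sin a * (cos b - 1) + cos a * (sin b - b)) by ring.
  pose proof (cos_bound2 b). pose proof (sin_bound2 b).
  pose proof (COS_bound a). pose proof (SIN_bound a).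
  eapply Rle_trans; [apply abs_comb|].
  - apply Rabs_le; lra.
  - apply Rabs_le; lra.
  - pose proof (pow2_ge_0 b). lra.
Qed.

Lemma quad_derive (u : R -> R) (x v B : R) :
  (forall h, Rabs (u (x + h) - u x - h * v) <= B * h^2) -> is_derive u x v.
Proof.
  intros H. apply is_derive_Reals. intros eps Heps.
  assert (HB : 0 <= B).
  { specialize (H 1). pose proof (Rabs_pos (u (x + 1) - u x - 1 * v)). simpl in H. lra. }
  assert (Hd : 0 < eps / (B + 1)) by (apply Rdiv_lt_0_compat; lra).
  exists (mkposreal _ Hd). intros h Hh0 Hh. simpl in Hh.
  specialize (H h).
  replace ((u (x + h) - u x) / h - v) with ((u (x + h) - u x - h * v) / h) by (field; auto).
  unfold Rdiv at 1. rewrite Rabs_mult, Rabs_inv.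
  assert (0 < Rabs h) by (apply Rabs_pos_lt; auto).
  apply (Rmult_lt_reg_r (Rabs h)); auto. rewrite Rmult_assoc, Rinv_l by lra. rewrite Rmult_1_r.
  replace (h^2) with (Rabs h * Rabs h) in H by (rewrite <- Rabs_mult; rewrite Rabs_pos_eq; [ring| nra]).
  assert (B * Rabs h < eps).
  { apply (Rmult_lt_reg_r (/ (B+1))). apply Rinv_0_lt_compat; lra.
    assert (Rabs h * / (B + 1) * B <= Rabs h) .
    { rewrite Rmult_assoc. assert (/ (B+1) * B <= 1).
      { apply (Rmult_le_reg_l (B+1)); [lra|]. rewrite <- Rmult_assoc, Rinv_r by lra. lra. }
      pose proof (Rabs_pos h). nra. }
    unfold Rdiv in Hh. nra. }
  nra.
Qed.

Lemma is_RInt_gen_pair (f1 f2 : R -> R) l1 l2 :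
  is_RInt_gen f1 FM FP l1 -> is_RInt_gen f2 FM FP l2 ->
  is_RInt_gen (V := prod_NormedModule R_AbsRing R_NormedModule R_NormedModule)
    (fun x => (f1 x, f2 x)) FM FP (l1, l2).
Proof.
  intros H1 H2 P [eps HP].
  specialize (H1 (ball l1 eps) (locally_ball l1 eps)).
  specialize (H2 (ball l2 eps) (locally_ball l2 eps)).
  unfold filtermapi in *.
  generalize (filter_and _ _ H1 H2). apply filter_imp.
  intros [a b] [[y1 [Hy1 Hb1]] [y2 [Hy2 Hb2]]]. simpl in *.
  exists (y1, y2). split.
  - apply (is_RInt_fct_extend_pair (U := R_NormedModule) (V := R_NormedModule)); simpl; auto.
  - apply HP. split; auto.
Qed.

Lemma is_RInt_gen_uniq (f : R -> R) l1 l2 :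
  is_RInt_gen f FM FP l1 -> is_RInt_gen f FM FP l2 -> l1 = l2.
Proof.
  intros H1 H2.
  rewrite <- (is_RInt_gen_unique (V := R_CompleteNormedModule) f l1 H1).
  apply (is_RInt_gen_unique (V := R_CompleteNormedModule) f l2 H2).
Qed.

Lemma gen_ext_all (f g : R -> R) l : (forall x, f x = g x) ->
  is_RInt_gen f FM FP l -> is_RInt_gen g FM FP l.
Proof.
  intros H. apply (is_RInt_gen_ext (V := R_NormedModule)).
  apply filter_forall. intros; apply H.
Qed.

Lemma gen_lin (f g : R -> R) a b lf lg : is_RInt_gen f FM FP lf -> is_RInt_gen g FM FP lg ->
  is_RInt_gen (fun x => a * f x + b * g x) FM FP (a * lf + b * lg).
Proof.
  intros Hf Hg.
  pose proof (is_RInt_gen_scal (V := R_NormedModule) f a lf Hf) as H1.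
  pose proof (is_RInt_gen_scal (V := R_NormedModule) g b lg Hg) as H2.
  exact (is_RInt_gen_plus (V := R_NormedModule) _ _ _ _ H1 H2).
Qed.

Lemma gen_correct (f : R -> R) l : is_RInt_gen f FM FP l -> is_RInt_gen f FM FP (RInt_gen f FM FP).
Proof.
  intros H. apply (RInt_gen_correct (V := R_CompleteNormedModule)). exists l. exact H.
Qed.

Lemma gen_value (f : R -> R) l : is_RInt_gen f FM FP l -> RInt_gen f FM FP = l.
Proof. intros H. apply (is_RInt_gen_unique (V := R_CompleteNormedModule)). exact H. Qed.

Lemma gen_zero (P dP : R -> R) c : (forall x, is_derive P x (dP x)) ->
  (forall x, continuous dP x) -> (forall x, Rabs x * Rabs (P x) <= c) ->
  is_RInt_gen dP FM FP 0.
Proof.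
  intros HD HC HB.
  assert (Hex : forall a b, ex_RInt dP a b).
  { intros a b. apply (ex_RInt_continuous (V := R_CompleteNormedModule)). intros; apply HC. }
  assert (HI : forall a b, RInt dP a b = P b - P a).
  { intros a b. apply is_RInt_unique.
    apply (is_RInt_derive (V := R_CompleteNormedModule) P dP); intros; auto. }
  apply filterlim_RInt_gen; auto.
  intros Q [eps HQ]. unfold filtermap.
  assert (Hc : 0 <= c). { specialize (HB 0). rewrite Rabs_R0 in HB. pose proof (Rabs_pos (P 0)). lra. }
  set (T := 2 * (c + 1) / eps).
  assert (HT : 0 < T). { unfold T. apply Rdiv_lt_0_compat; [lra| apply cond_pos]. }
  assert (Hdec : forall x, T <= Rabs x -> Rabs (P x) <= c / T).
  { intros x Hx. specialize (HB x). apply (Rmult_le_reg_l T); auto.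
    replace (T * (c / T)) with c by (field; lra). pose proof (Rabs_pos (P x)). nra. }
  apply eventually_pair with T. intros a b Ha Hb. apply HQ. apply ballR.
  simpl. rewrite HI. replace (P b - P a - 0) with (P b + - P a) by ring.
  eapply Rle_lt_trans; [apply Rabs_triang|]. rewrite Rabs_Ropp.
  assert (Rabs (P a) <= c / T) by (apply Hdec; rewrite Rabs_left; lra).
  assert (Rabs (P b) <= c / T) by (apply Hdec; rewrite Rabs_right; lra).
  assert (2 * (c / T) < eps).
  { unfold T. replace (2 * (c / (2 * (c + 1) / eps))) with (eps * (c / (c+1))).
    2:{ pose proof (cond_pos eps). field; repeat split; lra. }
    pose proof (cond_pos eps).
    assert (c / (c+1) < 1).
    { unfold Rdiv. apply (Rmult_lt_reg_r (c+1)); [lra|]. rewrite Rmult_assoc, Rinv_l by lra. lra. }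
    nra. }
  lra.
Qed.

Definition d1 (phi : R -> C) m x := Derive_n (fun t => fst (phi t)) m x.
Definition d2 (phi : R -> C) m x := Derive_n (fun t => snd (phi t)) m x.
Definition RE phi k m xi x := x^k * (d1 phi m x * cos (x*xi) - d2 phi m x * sin (x*xi)).
Definition IM phi k m xi x := x^k * (d1 phi m x * sin (x*xi) + d2 phi m x * cos (x*xi)).
Definition GR phi k m xi := RInt_gen (RE phi k m xi) FM FP.
Definition GI phi k m xi := RInt_gen (IM phi k m xi) FM FP.
Definition ad phi j m x := Rabs (x^j * d1 phi m x) + Rabs (x^j * d2 phi m x).

Definition Hyp (phi : R -> C) (N : nat -> nat -> R) : Prop :=
  smooth phi /\ (forall j m, 0 < N j m) /\
  (forall j m, N (S j) m ^ 2 <= N j m * N (S (S j)) m) /\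
  (forall j m x, ad phi j m x <= N j m).

Lemma d1_der phi m x : smooth phi -> ex_derive (d1 phi m) x.
Proof. intros Hs. exact (proj1 (Hs (S m) x)). Qed.
Lemma d2_der phi m x : smooth phi -> ex_derive (d2 phi m) x.
Proof. intros Hs. exact (proj2 (Hs (S m) x)). Qed.

Lemma RE_ex phi k m xi a b : smooth phi -> ex_RInt (RE phi k m xi) a b.
Proof.
  intros Hs. apply (ex_RInt_continuous (V := R_CompleteNormedModule)).
  intros z _. apply cont_of_der. unfold RE. auto_derive.
  split; [apply d1_der; auto|]. split; [apply d2_der; auto| auto].
Qed.

Lemma IM_ex phi k m xi a b : smooth phi -> ex_RInt (IM phi k m xi) a b.
Proof.
  intros Hs. apply (ex_RInt_continuous (V := R_CompleteNormedModule)).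
  intros z _. apply cont_of_der. unfold IM. auto_derive.
  split; [apply d1_der; auto|]. split; [apply d2_der; auto| auto].
Qed.

Lemma ad_S phi j m x : Rabs x * ad phi j m x = ad phi (S j) m x.
Proof.
  unfold ad. rewrite Rmult_plus_distr_l, <- !Rabs_mult. simpl. f_equal; f_equal; ring.
Qed.

Lemma ad_SS phi j m x : x^2 * ad phi j m x = ad phi (S (S j)) m x.
Proof.
  rewrite <- !ad_S. rewrite <- Rmult_assoc. f_equal.
  rewrite <- Rabs_mult. rewrite Rabs_pos_eq; [ring| nra].
Qed.

Lemma ad_pos phi j m x : 0 <= ad phi j m x.
Proof. unfold ad. pose proof (Rabs_pos (x^j * d1 phi m x)). pose proof (Rabs_pos (x^j * d2 phi m x)). lra. Qed.

Lemma RE_bound phi k m xi x : Rabs (RE phi k m xi x) <= ad phi k m x.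
Proof.
  unfold RE, ad. replace (x ^ k * (d1 phi m x * cos (x * xi) - d2 phi m x * sin (x * xi)))
    with (cos (x*xi) * (x^k * d1 phi m x) + (- sin (x*xi)) * (x^k * d2 phi m x)) by ring.
  apply abs_comb.
  - apply Rabs_le. pose proof (COS_bound (x*xi)). lra.
  - rewrite Rabs_Ropp. apply Rabs_le. pose proof (SIN_bound (x*xi)). lra.
Qed.

Lemma IM_bound phi k m xi x : Rabs (IM phi k m xi x) <= ad phi k m x.
Proof.
  unfold IM, ad. replace (x ^ k * (d1 phi m x * sin (x * xi) + d2 phi m x * cos (x * xi)))
    with (sin (x*xi) * (x^k * d1 phi m x) + cos (x*xi) * (x^k * d2 phi m x)) by ring.
  apply abs_comb.
  - apply Rabs_le. pose proof (SIN_bound (x*xi)). lra.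
  - apply Rabs_le. pose proof (COS_bound (x*xi)). lra.
Qed.

Lemma int_ad phi N (F : R -> R) K j m l : Hyp phi N -> 0 < K ->
  (forall x, Rabs (F x) <= K * ad phi j m x) -> (forall a b, ex_RInt F a b) ->
  is_RInt_gen F FM FP l ->
  Rabs l <= K * N (S j) m * (6 + 4 * ln (N j m * N (S (S j)) m / N (S j) m ^ 2)).
Proof.
  intros [Hs [Hpos [Hlc Had]]] HK HF Hex Hl.
  replace (N j m * N (S (S j)) m / N (S j) m ^ 2) with
    ((K * N j m) * (K * N (S (S j)) m) / (K * N (S j) m) ^ 2).
  2:{ pose proof (Hpos (S j) m). field. split; lra. }

  apply (sharp F (K * N j m) (K * N (S j) m) (K * N (S (S j)) m) l); auto.
  - pose proof (Hpos j m). nra.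
  - pose proof (Hpos (S j) m). nra.
  - specialize (Hlc j m). replace ((K * N (S j) m)^2) with (K^2 * N (S j) m ^2) by ring.
    replace (K * N j m * (K * N (S (S j)) m)) with (K^2 * (N j m * N (S (S j)) m)) by ring.
    apply Rmult_le_compat_l; auto. nra.
  - intros x. eapply Rle_trans; [apply HF|]. apply Rmult_le_compat_l; [lra| apply Had].
  - intros x. eapply Rle_trans; [apply Rmult_le_compat_l; [apply Rabs_pos| apply HF]|].
    rewrite <- Rmult_assoc, (Rmult_comm (Rabs x)), Rmult_assoc, ad_S.
    apply Rmult_le_compat_l; [lra| apply Had].
  - intros x. eapply Rle_trans; [apply Rmult_le_compat_l; [apply pow2_ge_0| apply HF]|].
    rewrite <- Rmult_assoc, (Rmult_comm (x^2)), Rmult_assoc, ad_SS.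
    apply Rmult_le_compat_l; [lra| apply Had].
Qed.

Lemma RE_gen phi N k m xi : Hyp phi N -> is_RInt_gen (RE phi k m xi) FM FP (GR phi k m xi).
Proof.
  intros [Hs [Hpos [Hlc Had]]].
  destruct (ex_gen (RE phi k m xi) (N (S (S k)) m)) as [l Hl].
  - intros; apply RE_ex; auto.
  - intros x. rewrite <- (Rmult_1_l (N _ _)). 
    eapply Rle_trans; [apply Rmult_le_compat_l; [apply pow2_ge_0| apply RE_bound]|].
    rewrite ad_SS. rewrite Rmult_1_l. apply Had.
  - unfold GR. eapply gen_correct; eauto.
Qed.

Lemma IM_gen phi N k m xi : Hyp phi N -> is_RInt_gen (IM phi k m xi) FM FP (GI phi k m xi).
Proof.
  intros [Hs [Hpos [Hlc Had]]].
  destruct (ex_gen (IM phi k m xi) (N (S (S k)) m)) as [l Hl].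
  - intros; apply IM_ex; auto.
  - intros x. rewrite <- (Rmult_1_l (N _ _)). 
    eapply Rle_trans; [apply Rmult_le_compat_l; [apply pow2_ge_0| apply IM_bound]|].
    rewrite ad_SS. rewrite Rmult_1_l. apply Had.
  - unfold GI. eapply gen_correct; eauto.
Qed.

Definition Bd (N : nat -> nat -> R) k m :=
  2 * N (S (S (S k))) m * (6 + 4 * ln (N (S (S k)) m * N (S (S (S (S k)))) m / N (S (S (S k))) m ^ 2)).

Lemma rem_pt (A1 A2 c1 c2 x y : R) :
  Rabs (A1 * c1 + A2 * c2) <= 2 * y^2 * (x^2 * (Rabs A1 + Rabs A2))
  \/ ~ (Rabs c1 <= 2 * (x*y)^2 /\ Rabs c2 <= 2 * (x*y)^2).
Proof.
  destruct (Rle_dec (Rabs c1) (2 * (x*y)^2)); destruct (Rle_dec (Rabs c2) (2 * (x*y)^2));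
    try (right; tauto).
  left. eapply Rle_trans; [apply Rabs_triang|]. rewrite !Rabs_mult.
  pose proof (Rabs_pos A1). pose proof (Rabs_pos A2).
  replace (2 * y^2 * (x^2 * (Rabs A1 + Rabs A2))) with (Rabs A1 * (2 * (x*y)^2) + Rabs A2 * (2 * (x*y)^2)) by ring.
  apply Rplus_le_compat; apply Rmult_le_compat_l; auto.
Qed.

Lemma GR_rem phi N k m z h : Hyp phi N ->
  Rabs (GR phi k m (z + h) - GR phi k m z + h * GI phi (S k) m z) <= Bd N k m * h^2.
Proof.
  intros HH. destruct (Req_dec h 0) as [->|Hh].
  - rewrite Rplus_0_r. replace (GR phi k m z - GR phi k m z + 0 * GI phi (S k) m z) with 0 by ring.
    rewrite Rabs_R0. simpl. lra.
  - set (F := fun x => RE phi k m (z + h) x - RE phi k m z x + h * IM phi (S k) m z x).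
    assert (HF : is_RInt_gen F FM FP (GR phi k m (z + h) - GR phi k m z + h * GI phi (S k) m z)).
    { pose proof (gen_lin _ _ 1 (-1) _ _ (RE_gen phi N k m (z+h) HH) (RE_gen phi N k m z HH)) as H1.
      pose proof (gen_lin _ _ 1 h _ _ H1 (IM_gen phi N (S k) m z HH)) as H2.
      replace (GR phi k m (z + h) - GR phi k m z + h * GI phi (S k) m z) with
        (1 * (1 * GR phi k m (z + h) + -1 * GR phi k m z) + h * GI phi (S k) m z) by ring.
      revert H2. apply gen_ext_all. intros x. unfold F. ring. }
    assert (Hk : 0 < 2 * h^2) by (assert (0 < h^2) by (apply pow2_gt_0; auto); lra).
    pose proof (int_ad phi N F (2 * h^2) (S (S k)) m (GR phi k m (z + h) - GR phi k m z + h * GI phi (S k) m z) HH Hk) as Hb.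
    unfold Bd. replace (2 * N (S (S (S k))) m *
      (6 + 4 * ln (N (S (S k)) m * N (S (S (S (S k)))) m / N (S (S (S k))) m ^ 2)) * h ^ 2)
      with (2 * h ^ 2 * N (S (S (S k))) m *
      (6 + 4 * ln (N (S (S k)) m * N (S (S (S (S k)))) m / N (S (S (S k))) m ^ 2))) by ring.
    apply Hb; auto.
    + intros x. rewrite <- ad_SS. unfold F, RE, IM, ad.
      replace (x * (z + h)) with (x * z + x * h) by ring.
      replace (x ^ k * (d1 phi m x * cos (x * z + x * h) - d2 phi m x * sin (x * z + x * h)) -
        x ^ k * (d1 phi m x * cos (x * z) - d2 phi m x * sin (x * z)) +
        h * (x ^ S k * (d1 phi m x * sin (x * z) + d2 phi m x * cos (x * z))))
        with ((x^k * d1 phi m x) * (cos (x * z + x * h) - cos (x * z) + (x * h) * sin (x * z))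
              + (- (x^k * d2 phi m x)) * (sin (x * z + x * h) - sin (x * z) - (x * h) * cos (x * z)))
        by (simpl; ring).
      destruct (rem_pt (x ^ k * d1 phi m x) (- (x ^ k * d2 phi m x))
         (cos (x * z + x * h) - cos (x * z) + x * h * sin (x * z))
         (sin (x * z + x * h) - sin (x * z) - x * h * cos (x * z)) x h) as [R|R].
      * rewrite Rabs_Ropp in R. exact R.
      * exfalso. apply R. split; [apply cos_rem| apply sin_rem].
    + intros a b. unfold F. apply (ex_RInt_plus (V := R_NormedModule)).
      * apply (ex_RInt_minus (V := R_NormedModule)); apply RE_ex; apply HH.
      * apply (ex_RInt_scal (V := R_NormedModule)); apply IM_ex; apply HH.
Qed.

Lemma GI_rem phi N k m z h : Hyp phi N ->
  Rabs (GI phi k m (z + h) - GI phi k m z - h * GR phi (S k) m z) <= Bd N k m * h^2.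
Proof.
  intros HH. destruct (Req_dec h 0) as [->|Hh].
  - rewrite Rplus_0_r. replace (GI phi k m z - GI phi k m z - 0 * GR phi (S k) m z) with 0 by ring.
    rewrite Rabs_R0. simpl. lra.
  - set (F := fun x => IM phi k m (z + h) x - IM phi k m z x + (- h) * RE phi (S k) m z x).
    assert (HF : is_RInt_gen F FM FP (GI phi k m (z + h) - GI phi k m z - h * GR phi (S k) m z)).
    { pose proof (gen_lin _ _ 1 (-1) _ _ (IM_gen phi N k m (z+h) HH) (IM_gen phi N k m z HH)) as H1.
      pose proof (gen_lin _ _ 1 (-h) _ _ H1 (RE_gen phi N (S k) m z HH)) as H2.
      replace (GI phi k m (z + h) - GI phi k m z - h * GR phi (S k) m z) with
        (1 * (1 * GI phi k m (z + h) + -1 * GI phi k m z) + (-h) * GR phi (S k) m z) by ring.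
      revert H2. apply gen_ext_all. intros x. unfold F. ring. }
    assert (Hk : 0 < 2 * h^2) by (assert (0 < h^2) by (apply pow2_gt_0; auto); lra).
    pose proof (int_ad phi N F (2 * h^2) (S (S k)) m (GI phi k m (z + h) - GI phi k m z - h * GR phi (S k) m z) HH Hk) as Hb.
    unfold Bd. replace (2 * N (S (S (S k))) m *
      (6 + 4 * ln (N (S (S k)) m * N (S (S (S (S k)))) m / N (S (S (S k))) m ^ 2)) * h ^ 2)
      with (2 * h ^ 2 * N (S (S (S k))) m *
      (6 + 4 * ln (N (S (S k)) m * N (S (S (S (S k)))) m / N (S (S (S k))) m ^ 2))) by ring.
    apply Hb; auto.
    + intros x. rewrite <- ad_SS. unfold F, RE, IM, ad.
      replace (x * (z + h)) with (x * z + x * h) by ring.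
      replace (x ^ k * (d1 phi m x * sin (x * z + x * h) + d2 phi m x * cos (x * z + x * h)) -
        x ^ k * (d1 phi m x * sin (x * z) + d2 phi m x * cos (x * z)) +
        - h * (x ^ S k * (d1 phi m x * cos (x * z) - d2 phi m x * sin (x * z))))
        with ((x^k * d1 phi m x) * (sin (x * z + x * h) - sin (x * z) - (x * h) * cos (x * z))
              + (x^k * d2 phi m x) * (cos (x * z + x * h) - cos (x * z) + (x * h) * sin (x * z)))
        by (simpl; ring).
      destruct (rem_pt (x ^ k * d1 phi m x) (x ^ k * d2 phi m x)
         (sin (x * z + x * h) - sin (x * z) - x * h * cos (x * z))
         (cos (x * z + x * h) - cos (x * z) + x * h * sin (x * z)) x h) as [R|R].
      * exact R.
      * exfalso. apply R. split; [apply sin_rem| apply cos_rem].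
    + intros a b. unfold F. apply (ex_RInt_plus (V := R_NormedModule)).
      * apply (ex_RInt_minus (V := R_NormedModule)); apply IM_ex; apply HH.
      * apply (ex_RInt_scal (V := R_NormedModule)); apply RE_ex; apply HH.
Qed.

Lemma G_derive phi N k m (s al be x : R) : Hyp phi N -> s * s = 1 ->
  is_derive (fun t => al * GR phi k m (s * t) + be * GI phi k m (s * t)) x
    (s * be * GR phi (S k) m (s * x) - s * al * GI phi (S k) m (s * x)).
Proof.
  intros HH Hs. apply (quad_derive _ _ _ ((Rabs al + Rabs be) * Bd N k m)).
  intros h.
  pose proof (GR_rem phi N k m (s * x) (s * h) HH) as H1.
  pose proof (GI_rem phi N k m (s * x) (s * h) HH) as H2.
  replace (s * (x + h)) with (s * x + s * h) by ring.
  replace ((s * h)^2) with (h^2) in H1, H2 by (replace ((s*h)^2) with ((s*s)*h^2) by ring; rewrite Hs; ring).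
  replace (al * GR phi k m (s * x + s * h) + be * GI phi k m (s * x + s * h) -
    (al * GR phi k m (s * x) + be * GI phi k m (s * x)) -
    h * (s * be * GR phi (S k) m (s * x) - s * al * GI phi (S k) m (s * x)))
    with (al * (GR phi k m (s * x + s * h) - GR phi k m (s * x) + s * h * GI phi (S k) m (s * x))
          + be * (GI phi k m (s * x + s * h) - GI phi k m (s * x) - s * h * GR phi (S k) m (s * x))) by ring.
  eapply Rle_trans; [apply Rabs_triang|]. rewrite !Rabs_mult.
  pose proof (Rabs_pos al). pose proof (Rabs_pos be).
  assert (Rabs al * Rabs (GR phi k m (s * x + s * h) - GR phi k m (s * x) + s * h * GI phi (S k) m (s * x)) <= Rabs al * (Bd N k m * h^2)) by (apply Rmult_le_compat_l; auto).
  assert (Rabs be * Rabs (GI phi k m (s * x + s * h) - GI phi k m (s * x) - s * h * GR phi (S k) m (s * x)) <= Rabs be * (Bd N k m * h^2)) by (apply Rmult_le_compat_l; auto).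
  lra.
Qed.

Fixpoint Tn (s : R) (n : nat) (ab : R * R) : R * R :=
  match n with
  | O => ab
  | S n => (s * snd (Tn s n ab), - (s * fst (Tn s n ab)))
  end.

Lemma G_Dn phi N k m s n al be : Hyp phi N -> s * s = 1 ->
  forall x,
  Derive_n (fun t => al * GR phi k m (s * t) + be * GI phi k m (s * t)) n x =
    fst (Tn s n (al, be)) * GR phi (k + n) m (s * x) + snd (Tn s n (al, be)) * GI phi (k + n) m (s * x)
  /\ ex_derive_n (fun t => al * GR phi k m (s * t) + be * GI phi k m (s * t)) n x.
Proof.
  intros HH Hs. induction n as [|n IH]; intros x.
  - simpl. rewrite Nat.add_0_r. split; [reflexivity| exact I].
  - simpl Derive_n. simpl ex_derive_n.
    pose proof (G_derive phi N (k + n) m s (fst (Tn s n (al, be))) (snd (Tn s n (al, be))) x HH Hs) as HD.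
    split.
    + rewrite (Derive_ext _ _ x (fun t => proj1 (IH t))).
      etransitivity; [exact (is_derive_unique _ _ _ HD)|]. simpl. rewrite Nat.add_succ_r. ring.
    + apply (ex_derive_ext (K := R_AbsRing) (V := R_NormedModule) (fun t => fst (Tn s n (al, be)) * GR phi (k + n) m (s * t) + snd (Tn s n (al, be)) * GI phi (k + n) m (s * t))).
      * intros t. symmetry. apply (proj1 (IH t)).
      * eexists. exact HD.
Qed.

Lemma Tn_abs s n ab : Rabs s = 1 -> Rabs (fst (Tn s n ab)) + Rabs (snd (Tn s n ab)) = Rabs (fst ab) + Rabs (snd ab).
Proof.
  intros Hs. induction n as [|n IH]; simpl; auto.
  rewrite Rabs_Ropp, !Rabs_mult, Hs. lra.
Qed.

Lemma RE_deriv phi k m z x : smooth phi -> is_derive (RE phi k m z) x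
   (INR k * RE phi (pred k) m z x + RE phi k (S m) z x - z * IM phi k m z x).
Proof.
  intros. unfold RE, IM. auto_derive.
  - split; [apply d1_der; auto|]. split; [apply d2_der; auto| auto].
  - change (Derive (fun x0 => d1 phi m x0) x) with (d1 phi (S m) x).
    change (Derive (fun x0 => d2 phi m x0) x) with (d2 phi (S m) x). ring.
Qed.

Lemma IM_deriv phi k m z x : smooth phi -> is_derive (IM phi k m z) x
   (INR k * IM phi (pred k) m z x + IM phi k (S m) z x + z * RE phi k m z x).
Proof.
  intros. unfold RE, IM. auto_derive.
  - split; [apply d1_der; auto|]. split; [apply d2_der; auto| auto].
  - change (Derive (fun x0 => d1 phi m x0) x) with (d1 phi (S m) x).
    change (Derive (fun x0 => d2 phi m x0) x) with (d2 phi (S m) x). ring.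
Qed.



Lemma IBP_I phi N k m z : Hyp phi N ->
  z * GI phi k m z = INR k * GR phi (pred k) m z + GR phi k (S m) z.
Proof.
  intros HH. pose proof HH as [Hs [Hpos [Hlc Had]]].
  assert (H0 : is_RInt_gen (fun x => INR k * RE phi (pred k) m z x + RE phi k (S m) z x - z * IM phi k m z x) FM FP 0).
  { apply (gen_zero (RE phi k m z) _ (N (S k) m)).
    - intros x. apply RE_deriv; auto.
    - intros x. apply cont_of_der. unfold RE, IM. auto_derive.
      repeat match goal with
      | |- _ /\ _ => split
      | |- True => exact I
      | |- ex_derive (fun x0 => d1 phi ?m x0) _ => apply (d1_der phi m); assumption
      | |- ex_derive (fun x0 => d2 phi ?m x0) _ => apply (d2_der phi m); assumption
      end.
    - intros x. eapply Rle_trans; [apply Rmult_le_compat_l; [apply Rabs_pos| apply RE_bound]|].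
      rewrite ad_S. apply Had. }
  pose proof (gen_lin _ _ 1 (-z) _ _ (gen_lin _ _ (INR k) 1 _ _ (RE_gen phi N (pred k) m z HH) (RE_gen phi N k (S m) z HH)) (IM_gen phi N k m z HH)) as H1.
  assert (H2 : is_RInt_gen (fun x => INR k * RE phi (pred k) m z x + RE phi k (S m) z x - z * IM phi k m z x) FM FP
     (1 * (INR k * GR phi (pred k) m z + 1 * GR phi k (S m) z) + - z * GI phi k m z)).
  { revert H1. apply gen_ext_all. intros; ring. }
  pose proof (is_RInt_gen_uniq _ _ _ H0 H2). lra.
Qed.

Lemma IBP_R phi N k m z : Hyp phi N ->
  z * GR phi k m z = - (INR k * GI phi (pred k) m z + GI phi k (S m) z).
Proof.
  intros HH. pose proof HH as [Hs [Hpos [Hlc Had]]].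
  assert (H0 : is_RInt_gen (fun x => INR k * IM phi (pred k) m z x + IM phi k (S m) z x + z * RE phi k m z x) FM FP 0).
  { apply (gen_zero (IM phi k m z) _ (N (S k) m)).
    - intros x. apply IM_deriv; auto.
    - intros x. apply cont_of_der. unfold RE, IM. auto_derive.
      repeat match goal with
      | |- _ /\ _ => split
      | |- True => exact I
      | |- ex_derive (fun x0 => d1 phi ?m x0) _ => apply (d1_der phi m); assumption
      | |- ex_derive (fun x0 => d2 phi ?m x0) _ => apply (d2_der phi m); assumption
      end.
    - intros x. eapply Rle_trans; [apply Rmult_le_compat_l; [apply Rabs_pos| apply IM_bound]|].
      rewrite ad_S. apply Had. }
  pose proof (gen_lin _ _ 1 z _ _ (gen_lin _ _ (INR k) 1 _ _ (IM_gen phi N (pred k) m z HH) (IM_gen phi N k (S m) z HH)) (RE_gen phi N k m z HH)) as H1.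
  assert (H2 : is_RInt_gen (fun x => INR k * IM phi (pred k) m z x + IM phi k (S m) z x + z * RE phi k m z x) FM FP
     (1 * (INR k * GI phi (pred k) m z + 1 * GI phi k (S m) z) + z * GR phi k m z)).
  { revert H1. apply gen_ext_all. intros; ring. }
  pose proof (is_RInt_gen_uniq _ _ _ H0 H2). lra.
Qed.

Fixpoint bin (n j : nat) : R :=
  match n, j with
  | O, O => 1
  | O, S _ => 0
  | S n', O => 1
  | S n', S j' => bin n' j' + bin n' (S j')
  end.

Fixpoint ff (k j : nat) : R :=
  match k, j with
  | _, O => 1
  | O, S _ => 0
  | S k', S j' => INR (S k') * ff k' j'
  end.

Definition Lsum (B0 : nat -> nat -> R) p k m :=
  sum_f_R0 (fun j => bin p j * ff k j * B0 (k - j)%nat (m + p - j)%nat) p.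

Lemma sum_shift (f : nat -> R) n : sum_f_R0 f (S n) = f O + sum_f_R0 (fun j => f (S j)) n.
Proof.
  induction n as [|n IH].
  - simpl. ring.
  - change (sum_f_R0 f (S (S n))) with (sum_f_R0 f (S n) + f (S (S n))).
    rewrite IH. simpl. ring.
Qed.

Lemma sum_shift0 (g : nat -> R) p : g (S p) = 0 -> sum_f_R0 g p = g O + sum_f_R0 (fun j => g (S j)) p.
Proof.
  intros H. rewrite <- sum_shift. simpl. rewrite H. ring.
Qed.

Lemma bin_big n j : (n < j)%nat -> bin n j = 0.
Proof.
  revert j. induction n as [|n IH]; intros j Hj.
  - destruct j; [lia| reflexivity].
  - destruct j; [lia|]. simpl. rewrite !IH by lia. ring.
Qed.

Lemma bin_n0 n : bin n 0 = 1.
Proof. destruct n; reflexivity. Qed.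

Lemma ff_k0 k : ff k 0 = 1.
Proof. destruct k; reflexivity. Qed.

Lemma sum_ext (f g : nat -> R) n : (forall j, (j <= n)%nat -> f j = g j) -> sum_f_R0 f n = sum_f_R0 g n.
Proof.
  induction n as [|n IH]; intros H; simpl.
  - apply H; lia.
  - rewrite IH by (intros; apply H; lia). rewrite H by lia. reflexivity.
Qed.

Lemma sum_plus' (f g : nat -> R) n : sum_f_R0 (fun j => f j + g j) n = sum_f_R0 f n + sum_f_R0 g n.
Proof. induction n as [|n IH]; simpl; [ring| rewrite IH; ring]. Qed.

Lemma sum_scal' (a : R) (f : nat -> R) n : sum_f_R0 (fun j => a * f j) n = a * sum_f_R0 f n.
Proof. induction n as [|n IH]; simpl; [ring| rewrite IH; ring]. Qed.

Lemma Lsum_S B0 p k m : Lsum B0 (S p) k m = INR k * Lsum B0 p (pred k) m + Lsum B0 p k (S m).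
Proof.
  unfold Lsum.
  set (X := fun j => ff k j * B0 (k - j)%nat (m + S p - j)%nat).
  transitivity (sum_f_R0 (fun j => bin (S p) j * X j) (S p)).
  { apply sum_ext. intros j _. unfold X. ring. }
  rewrite sum_shift. simpl bin at 1.
  transitivity (X O + sum_f_R0 (fun j => bin p (S j) * X (S j)) p + sum_f_R0 (fun j => bin p j * X (S j)) p).
  { rewrite (sum_ext _ (fun j => bin p j * X (S j) + bin p (S j) * X (S j))) by (intros; simpl; ring).
    rewrite sum_plus'. ring. }
  assert (E1 : sum_f_R0 (fun j => bin p j * ff k j * B0 (k - j)%nat (S m + p - j)%nat) p =
               X O + sum_f_R0 (fun j => bin p (S j) * X (S j)) p).
  { rewrite (sum_ext _ (fun j => bin p j * X j)).
    - rewrite (sum_shift0 (fun j => bin p j * X j)) by (rewrite bin_big by lia; ring).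
      rewrite bin_n0. ring.
    - intros j Hj. unfold X. replace (m + S p - j)%nat with (S m + p - j)%nat by lia. ring. }
  assert (E2 : sum_f_R0 (fun j => bin p j * X (S j)) p =
     INR k * sum_f_R0 (fun j => bin p j * ff (pred k) j * B0 (pred k - j)%nat (m + p - j)%nat) p).
  { rewrite <- sum_scal'. apply sum_ext. intros j Hj. unfold X.
    destruct k as [|k'].
    - simpl. ring.
    - change (ff (S k') (S j)) with (INR (S k') * ff k' j).
      replace (S k' - S j)%nat with (k' - j)%nat by lia.
      replace (m + S p - S j)%nat with (m + p - j)%nat by lia. simpl pred. ring. }
  rewrite E1, E2. ring.
Qed.

Definition B0 (N : nat -> nat -> R) k m :=
  N (S k) m * (6 + 4 * ln (N k m * N (S (S k)) m / N (S k) m ^ 2)).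

Lemma Gbase phi N k m z : Hyp phi N ->
  Rabs (GR phi k m z) <= B0 N k m /\ Rabs (GI phi k m z) <= B0 N k m.
Proof.
  intros HH. pose proof HH as [Hs _]. unfold B0. split.
  - assert (H := int_ad phi N (RE phi k m z) 1 k m (GR phi k m z) HH).
    rewrite Rmult_1_l in H. apply H; [lra| | |exact (RE_gen phi N k m z HH)].
    + intros x. rewrite Rmult_1_l. apply RE_bound.
    + intros; apply RE_ex; auto.
  - assert (H := int_ad phi N (IM phi k m z) 1 k m (GI phi k m z) HH).
    rewrite Rmult_1_l in H. apply H; [lra| | |exact (IM_gen phi N k m z HH)].
    + intros x. rewrite Rmult_1_l. apply IM_bound.
    + intros; apply IM_ex; auto.
Qed.

Lemma step_abs (zp k a b : R) : 0 <= k ->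
  Rabs (zp * (- (k * a + b))) <= k * Rabs (zp * a) + Rabs (zp * b).
Proof.
  intros Hk. replace (zp * (- (k * a + b))) with (- (k * (zp * a) + zp * b)) by ring.
  rewrite Rabs_Ropp. eapply Rle_trans; [apply Rabs_triang|].
  rewrite Rabs_mult, (Rabs_pos_eq k Hk). lra.
Qed.

Lemma Gpow phi N p : Hyp phi N -> forall k m z,
  Rabs (z^p * GR phi k m z) <= Lsum (B0 N) p k m /\ Rabs (z^p * GI phi k m z) <= Lsum (B0 N) p k m.
Proof.
  intros HH. induction p as [|p IH]; intros k m z.
  - unfold Lsum. simpl. rewrite ff_k0, !Nat.sub_0_r, ?Nat.add_0_r, !Rmult_1_l. apply Gbase; auto.
  - rewrite Lsum_S. pose proof (pos_INR k) as Hk.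
    destruct (IH (pred k) m z) as [A1 A2]. destruct (IH k (S m) z) as [B1 B2].
    split.
    + replace (z ^ S p * GR phi k m z) with (z^p * (z * GR phi k m z)) by (simpl; ring).
      rewrite (IBP_R phi N k m z HH).
      eapply Rle_trans; [apply step_abs; auto|].
      apply Rplus_le_compat; auto. apply Rmult_le_compat_l; auto.
    + replace (z ^ S p * GI phi k m z) with (z^p * (z * GI phi k m z)) by (simpl; ring).
      rewrite (IBP_I phi N k m z HH).
      replace (z ^ p * (INR k * GR phi (pred k) m z + GR phi k (S m) z)) with
        (z^p * (- (INR k * (- GR phi (pred k) m z) + (- GR phi k (S m) z)))) by ring.
      eapply Rle_trans; [apply step_abs; auto|].
      replace (z ^ p * - GR phi (pred k) m z) with (- (z ^ p * GR phi (pred k) m z)) by ring.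
      replace (z ^ p * - GR phi k (S m) z) with (- (z ^ p * GR phi k (S m) z)) by ring.
      rewrite !Rabs_Ropp.
      apply Rplus_le_compat; auto. apply Rmult_le_compat_l; auto.
Qed.

Lemma Cmod_le_sum (a b : R) : Cmod (a, b) <= Rabs a + Rabs b.
Proof.
  unfold Cmod. cbn [fst snd].
  pose proof (Rabs_pos a). pose proof (Rabs_pos b).
  rewrite <- (sqrt_pow2 (Rabs a + Rabs b)) by lra.
  apply sqrt_le_1_alt.
  rewrite <- (pow2_abs a), <- (pow2_abs b). nra.
Qed.

Lemma abs_pow_s (s x : R) p : Rabs s = 1 -> Rabs (x^p) = Rabs ((s*x)^p).
Proof.
  intros Hs. rewrite <- !RPow_abs, Rabs_mult, Hs, Rmult_1_l. reflexivity.
Qed.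

Lemma comb_bound (a b xp G1 G2 L : R) : Rabs (xp * G1) <= L -> Rabs (xp * G2) <= L ->
  Rabs (xp * (a * G1 + b * G2)) <= (Rabs a + Rabs b) * L.
Proof.
  intros H1 H2. replace (xp * (a * G1 + b * G2)) with (a * (xp * G1) + b * (xp * G2)) by ring.
  eapply Rle_trans; [apply Rabs_triang|]. rewrite (Rabs_mult a), (Rabs_mult b).
  pose proof (Rabs_pos a). pose proof (Rabs_pos b).
  assert (Rabs a * Rabs (xp * G1) <= Rabs a * L) by (apply Rmult_le_compat_l; auto).
  assert (Rabs b * Rabs (xp * G2) <= Rabs b * L) by (apply Rmult_le_compat_l; auto).
  rewrite Rmult_plus_distr_r. lra.
Qed.

Lemma Cmult_RtoC (r u v : R) : Cmult (RtoC r) (u, v) = (r * u, r * v).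
Proof. unfold Cmult, RtoC. simpl. f_equal; ring. Qed.

Lemma final_bound phi N s al be al' be' p q x : Hyp phi N -> s * s = 1 -> Rabs s = 1 ->
  Cmod (Cmult (RtoC (x^p))
    (Derive_n (fun t => al * GR phi 0 0 (s*t) + be * GI phi 0 0 (s*t)) q x,
     Derive_n (fun t => al' * GR phi 0 0 (s*t) + be' * GI phi 0 0 (s*t)) q x))
  <= (Rabs al + Rabs be + Rabs al' + Rabs be') * Lsum (B0 N) p q 0.
Proof.
  intros HH Hs Ha.
  rewrite (proj1 (G_Dn phi N 0 0 s q al be HH Hs x)).
  rewrite (proj1 (G_Dn phi N 0 0 s q al' be' HH Hs x)).
  simpl Nat.add.
  pose proof (Tn_abs s q (al, be) Ha) as T1. pose proof (Tn_abs s q (al', be') Ha) as T2.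
  simpl fst in T1, T2. simpl snd in T1, T2.
  destruct (Tn s q (al, be)) as [a b]. destruct (Tn s q (al', be')) as [a' b'].
  simpl fst in *. simpl snd in *.
  destruct (Gpow phi N p HH q 0 (s * x)) as [G1 G2].
  assert (G1' : Rabs (x^p * GR phi q 0 (s*x)) <= Lsum (B0 N) p q 0)
    by (rewrite Rabs_mult, (abs_pow_s s x p Ha), <- Rabs_mult; exact G1).
  assert (G2' : Rabs (x^p * GI phi q 0 (s*x)) <= Lsum (B0 N) p q 0)
    by (rewrite Rabs_mult, (abs_pow_s s x p Ha), <- Rabs_mult; exact G2).
  rewrite Cmult_RtoC.
  eapply Rle_trans; [apply Cmod_le_sum|].
  pose proof (comb_bound a b _ _ _ _ G1' G2'). pose proof (comb_bound a' b' _ _ _ _ G1' G2').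
  rewrite T1 in H. rewrite T2 in H0. lra.
Qed.

Lemma bin_le n j : 0 <= bin n j <= 2^n.
Proof.
  revert j. induction n as [|n IH]; intros j.
  - destruct j; simpl; lra.
  - destruct j; simpl.
    + pose proof (pow_le 2 n ltac:(lra)). split; try lra.
      assert (1 <= 2^n) by (apply pow_R1_Rle; lra). lra.
    + destruct (IH j). destruct (IH (S j)). lra.
Qed.

Lemma ff_nonneg k j : 0 <= ff k j.
Proof.
  revert j. induction k as [|k IH]; intros j; destruct j.
  - rewrite ff_k0; lra.
  - simpl; lra.
  - rewrite ff_k0; lra.
  - change (ff (S k) (S j)) with (INR (S k) * ff k j).
    apply Rmult_le_pos; [apply pos_INR| apply IH].
Qed.

Lemma ffS q j : ff q (S j) = (INR q - INR j) * ff q j.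
Proof.
  revert j. induction q as [|q IH]; intros j.
  - destruct j; simpl; ring.
  - destruct j.
    + change (ff (S q) 1) with (INR (S q) * ff q 0). rewrite ff_k0, ff_k0. simpl INR. ring.
    + change (ff (S q) (S (S j))) with (INR (S q) * ff q (S j)).
      change (ff (S q) (S j)) with (INR (S q) * ff q j).
      rewrite IH. rewrite !S_INR. ring.
Qed.

Lemma ff_le q j : ff q j <= 2^q * INR (fact j).
Proof.
  revert j. induction q as [|q IH]; intros j.
  - destruct j; simpl; [lra|]. pose proof (pos_INR (fact j + j * fact j)). lra.
  - destruct j.
    + rewrite ff_k0. simpl. assert (1 <= 2^q) by (apply pow_R1_Rle; lra). lra.
    + change (ff (S q) (S j)) with (INR (S q) * ff q j).
      assert (E : INR (S q) * ff q j = ff q (S j) + INR (S j) * ff q j).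
      { rewrite ffS. rewrite !S_INR. ring. }
      rewrite E. pose proof (IH (S j)). pose proof (IH j).
      assert (INR (S j) * ff q j <= INR (S j) * (2^q * INR (fact j))) by (apply Rmult_le_compat_l; [apply pos_INR| auto]).
      replace (2 ^ S q * INR (fact (S j))) with (2^q * INR (fact (S j)) + INR (S j) * (2^q * INR (fact j))).
      * lra.
      * rewrite fact_simpl, mult_INR. simpl pow. ring.
Qed.

Lemma sum_le_const (f : nat -> R) n T : (forall j, (j <= n)%nat -> f j <= T) -> sum_f_R0 f n <= INR (S n) * T.
Proof.
  induction n as [|n IH]; intros H.
  - simpl. rewrite Rmult_1_l. apply H; lia.
  - simpl sum_f_R0. specialize (IH (fun j Hj => H j ltac:(lia))).
    specialize (H (S n) ltac:(lia)).
    replace (INR (S (S n)) * T) with (INR (S n) * T + T) by (rewrite (S_INR (S n)); ring). lra.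
Qed.

Lemma INR_S_le_pow p : INR (S p) <= 2^p.
Proof.
  induction p as [|p IH]; [simpl; lra|]. rewrite (S_INR (S p)).
  assert (1 <= 2^p) by (apply pow_R1_Rle; lra). simpl pow. lra.
Qed.

Definition Nspec (C0 h : R) (M Bq : nat -> R) j m := 2 * C0 * (h^(j+m) * M j * Bq m).

Lemma Mtilde_eq M k : (forall p, 0 < M p) ->
  Mtilde M k = M (S k) * (2 + ln (M k * M (S (S k)) / M (S k) ^ 2)).
Proof.
  intros HM. unfold Mtilde, quot. pose proof (HM k). pose proof (HM (S k)). pose proof (HM (S (S k))).
  replace (exp 2 * (M (S (S k)) / M (S k)) / (M (S k) / M k)) with
    (exp 2 * (M k * M (S (S k)) / M (S k) ^ 2)) by (field; lra).
  rewrite ln_mult, ln_exp; [reflexivity| apply exp_pos|].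
  apply Rdiv_lt_0_compat; [nra| apply pow_lt; lra].
Qed.

Lemma B0_spec C0 h M Bq k m : 0 < C0 -> 0 < h -> (forall p, 0 < M p) -> (forall p, 0 < Bq p) ->
  B0 (Nspec C0 h M Bq) k m <= 8 * C0 * (h^(k+m+1) * Bq m * Mtilde M k).
Proof.
  intros HC Hh HM HB. rewrite Mtilde_eq by auto. unfold B0, Nspec.
  pose proof (HM k). pose proof (HM (S k)). pose proof (HM (S (S k))). pose proof (HB m).
  assert (Hp : 0 < h^(k+m)) by (apply pow_lt; lra).
  replace (2 * C0 * (h ^ (k + m) * M k * Bq m) * (2 * C0 * (h ^ (S (S k) + m) * M (S (S k)) * Bq m)) /
      (2 * C0 * (h ^ (S k + m) * M (S k) * Bq m)) ^ 2) with (M k * M (S (S k)) / M (S k) ^ 2).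
  2:{ simpl Nat.add. simpl pow. field. repeat split; lra. }
  replace (k + m + 1)%nat with (S k + m)%nat by lia.
  set (L := ln (M k * M (S (S k)) / M (S k) ^ 2)).
  assert (0 < h ^ (S k + m)) by (apply pow_lt; lra).
  assert (0 <= 2 * C0 * (h ^ (S k + m) * M (S k) * Bq m)).
  { apply Rmult_le_pos; [lra|]. apply Rmult_le_pos; [apply Rmult_le_pos|]; lra. }
  replace (8 * C0 * (h ^ (S k + m) * Bq m * (M (S k) * (2 + L))))
    with (2 * C0 * (h ^ (S k + m) * M (S k) * Bq m) * (8 + 4 * L)) by ring.
  apply Rmult_le_compat_l; lra.
Qed.

Lemma pow_mono_base (a b : R) n : 0 <= a -> a <= b -> a^n <= b^n.
Proof. intros. apply pow_incr; lra. Qed.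

Lemma combo_pow (D : R) p q : 0 < D ->
  2^p * 2^p * 2^q * D^p <= (4 * Rmax D 1) ^ (p + q).
Proof.
  intros HD. set (D' := Rmax D 1).
  assert (HD1 : 1 <= D') by apply Rmax_r. assert (HDD : D <= D') by apply Rmax_l.
  rewrite Rpow_mult_distr, !pow_add.
  assert (E4 : 4^p = 2^p * 2^p) by (rewrite <- Rpow_mult_distr; f_equal; lra).
  assert (2^q <= 4^q) by (apply pow_mono_base; lra).
  assert (D^p <= D'^p) by (apply pow_mono_base; lra).
  assert (1 <= D'^q) by (apply pow_R1_Rle; lra).
  assert (0 < 2^p) by (apply pow_lt; lra). assert (0 < 2^q) by (apply pow_lt; lra).
  assert (0 < D^p) by (apply pow_lt; lra).
  rewrite E4.
  assert (0 < 2^p * 2^p) by nra.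
  assert (2^q * D^p <= 4^q * (D'^p * D'^q)).
  { apply Rmult_le_compat; try lra. nra. }
  replace (2 ^ p * 2 ^ p * 4 ^ q * (D' ^ p * D' ^ q)) with ((2^p * 2^p) * (4 ^ q * (D' ^ p * D' ^ q))) by ring.
  replace (2 ^ p * 2 ^ p * 2 ^ q * D ^ p) with ((2^p * 2^p) * (2^q * D^p)) by ring.
  apply Rmult_le_compat_l; lra.
Qed.

Lemma Lsum_final C0 h M Bq c D a' p q : 0 < C0 -> 1 <= h -> (forall p, 0 < M p) -> (forall p, 0 < Bq p) ->
  0 < c -> 0 < D -> (forall p j, (j <= p)%nat -> INR (fact j) * Bq (p - j)%nat <= c * D^p * Bq p) ->
  0 < a' -> (forall p q, (p <= q)%nat -> Mtilde M p <= a' * Mtilde M q) -> (forall k, 0 < Mtilde M k) ->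
  2 * Lsum (B0 (Nspec C0 h M Bq)) p q 0 <= (16 * c * a' * h * C0) * ((4 * Rmax D 1 * h)^(p+q) * Bq p * Mtilde M q).
Proof.
  intros HC Hh HM HB Hc HD HPA Ha HMt HMp.
  set (Y := 8 * C0 * h^(p+q+1) * a' * Mtilde M q).
  assert (HY : 0 <= Y).
  { unfold Y. pose proof (HMp q). assert (0 < h^(p+q+1)) by (apply pow_lt; lra).
    apply Rmult_le_pos; [|lra]. apply Rmult_le_pos; [|lra]. apply Rmult_le_pos; lra. }
  set (T := 2^p * (2^q * c * D^p * Bq p) * Y).
  assert (HT : forall j, (j <= p)%nat -> bin p j * ff q j * B0 (Nspec C0 h M Bq) (q - j)%nat (0 + p - j)%nat <= T).
  { intros j Hj. simpl Nat.add.
    assert (HB0 : B0 (Nspec C0 h M Bq) (q - j)%nat (p - j)%nat <= Bq (p - j)%nat * Y).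
    { eapply Rle_trans; [apply B0_spec; auto; lra|]. unfold Y.
      pose proof (HB (p - j)%nat). pose proof (HMp (q - j)%nat).
      assert (h ^ (q - j + (p - j) + 1) <= h^(p+q+1)) by (apply Rle_pow; [lra| lia]).
      assert (Mtilde M (q - j) <= a' * Mtilde M q) by (apply HMt; lia).
      assert (0 < h ^ (q - j + (p - j) + 1)) by (apply pow_lt; lra).
      replace (Bq (p - j)%nat * (8 * C0 * h ^ (p + q + 1) * a' * Mtilde M q))
        with ((8 * C0 * Bq (p - j)%nat) * (h ^ (p + q + 1) * (a' * Mtilde M q))) by ring.
      replace (8 * C0 * (h ^ (q - j + (p - j) + 1) * Bq (p - j)%nat * Mtilde M (q - j)))
        with ((8 * C0 * Bq (p - j)%nat) * (h ^ (q - j + (p - j) + 1) * Mtilde M (q - j))) by ring.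
      apply Rmult_le_compat_l; [nra|]. apply Rmult_le_compat; lra. }
    pose proof (bin_le p j) as [Hb1 Hb2]. pose proof (ff_nonneg q j).
    pose proof (ff_le q j). pose proof (HPA p j Hj). pose proof (HB (p - j)%nat).
    assert (X2 : ff q j * Bq (p - j)%nat <= 2^q * c * D^p * Bq p).
    { eapply Rle_trans; [apply Rmult_le_compat_r; [lra| exact H0]|].
      replace (2 ^ q * INR (fact j) * Bq (p - j)%nat) with (2^q * (INR (fact j) * Bq (p - j)%nat)) by ring.
      replace (2 ^ q * c * D ^ p * Bq p) with (2^q * (c * D^p * Bq p)) by ring.
      apply Rmult_le_compat_l; [apply pow_le; lra| auto]. }
    eapply Rle_trans.
    { apply Rmult_le_compat_l; [apply Rmult_le_pos; auto| exact HB0]. }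
    replace (bin p j * ff q j * (Bq (p - j)%nat * Y)) with (bin p j * (ff q j * Bq (p - j)%nat) * Y) by ring.
    unfold T. apply Rmult_le_compat_r; auto.
    apply Rmult_le_compat; auto. apply Rmult_le_pos; lra. }
  unfold Lsum. eapply Rle_trans.
  { apply Rmult_le_compat_l; [lra|]. apply sum_le_const. exact HT. }
  pose proof (INR_S_le_pow p).
  assert (HT0 : 0 <= T).
  { unfold T. pose proof (HB p). assert (0 < 2^p) by (apply pow_lt; lra).
    assert (0 < 2^q) by (apply pow_lt; lra). assert (0 < D^p) by (apply pow_lt; lra).
    apply Rmult_le_pos; [|auto]. apply Rmult_le_pos; [lra|].
    apply Rmult_le_pos; [|lra]. apply Rmult_le_pos; [|lra]. apply Rmult_le_pos; lra. }
  eapply Rle_trans.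
  { apply Rmult_le_compat_l; [lra|]. apply Rmult_le_compat_r; [exact HT0| exact H]. }
  pose proof (combo_pow D p q HD).
  unfold T, Y. rewrite pow_add with (n := (p+q)%nat), pow_1.
  rewrite Rpow_mult_distr.
  pose proof (HB p). pose proof (HMp q). assert (0 < h^(p+q)) by (apply pow_lt; lra).
  set (Z := 16 * c * a' * h * C0 * Bq p * Mtilde M q * h ^ (p + q)).
  assert (0 < Z). { unfold Z. pose proof (HMp q) as Hq. set (mt := Mtilde M q) in *. clearbody mt. repeat apply Rmult_lt_0_compat; lra. }
  replace (2 * (2 ^ p * (2 ^ p * (2 ^ q * c * D ^ p * Bq p) * (8 * C0 * (h ^ (p + q) * h) * a' * Mtilde M q))))
    with (Z * (2^p * 2^p * 2^q * D^p)) by (unfold Z; ring).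
  replace (16 * c * a' * h * C0 * ((4 * Rmax D 1) ^ (p + q) * h ^ (p + q) * Bq p * Mtilde M q))
    with (Z * (4 * Rmax D 1) ^ (p + q)) by (unfold Z; ring).
  apply Rmult_le_compat_l; lra.
Qed.

Definition PA (Bq : nat -> R) := exists c D, 0 < c /\ 0 < D /\
  forall p j, (j <= p)%nat -> INR (fact j) * Bq (p - j)%nat <= c * D^p * Bq p.

Lemma fact_mul_le a b : (fact a * fact b <= fact (a + b))%nat.
Proof.
  induction a as [|a IH]; simpl; [lia|].
  pose proof (lt_O_fact (a + b)). nia.
Qed.

Lemma PA_case1 A : (forall p, 0 < A p) -> almost_increasing A -> PA (Ahat A).
Proof.
  intros HA [a [Ha HI]]. exists a, 1. split; auto. split; [lra|].
  intros p j Hj. unfold Ahat. rewrite pow1.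
  pose proof (fact_mul_le j (p - j)) as Hf. replace (j + (p - j))%nat with p in Hf by lia.
  apply le_INR in Hf. rewrite mult_INR in Hf.
  pose proof (HI (p - j)%nat p ltac:(lia)). pose proof (HA (p - j)%nat). pose proof (HA p).
  pose proof (pos_INR (fact j)). pose proof (pos_INR (fact (p - j))).
  replace (INR (fact j) * (INR (fact (p - j)) * A (p - j)%nat)) with
    ((INR (fact j) * INR (fact (p - j))) * A (p - j)%nat) by ring.
  replace (a * 1 * (INR (fact p) * A p)) with (INR (fact p) * (a * A p)) by ring.
  apply Rmult_le_compat; try nra.
Qed.

Lemma liminf_extract A : (forall p, 0 < A p) -> liminf_root_pos A ->
  exists d c, 0 < d <= 1 /\ 0 < c /\ forall j, c * d^j <= A j.
Proof.
  intros HA HL. unfold liminf_root_pos in HL.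
  set (u := fun p => Rpower (A p) (/ INR p)) in *.
  destruct (ex_LimInf_seq u) as [l Hl].
  rewrite (is_LimInf_seq_unique u l Hl) in HL.
  assert (Hev : exists d0 N, 0 < d0 /\ forall n, (N <= n)%nat -> d0 < u n).
  { destruct l as [l| |]; simpl in HL.
    - assert (Hl2 : 0 < l / 2) by lra.
      destruct (proj2 (Hl (mkposreal _ Hl2))) as [N HN]. exists (l/2), N. split; auto.
      intros n Hn. specialize (HN n Hn). simpl in HN. lra.
    - destruct (Hl 1) as [N HN]. exists 1, N. split; [lra| auto].
    - contradiction. }
  destruct Hev as [d0 [N [Hd0 HN]]].
  set (d := Rmin d0 1).
  assert (Hd : 0 < d <= 1) by (unfold d; split; [apply Rmin_glb_lt; lra| apply Rmin_r]).
  assert (Hbig : forall n, (Nat.max N 1 <= n)%nat -> d^n <= A n).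
  { intros n Hn. specialize (HN n ltac:(lia)). unfold u in HN.
    assert (Hn0 : (0 < n)%nat) by lia.
    assert (E : (Rpower (A n) (/ INR n))^n = A n).
    { rewrite <- Rpower_pow by (apply exp_pos).
      rewrite Rpower_mult. rewrite Rinv_l by (apply not_0_INR; lia). apply Rpower_1; auto. }
    rewrite <- E. apply pow_incr. split; [lra|]. assert (d <= d0) by apply Rmin_l. lra. }
  set (K := Nat.max N 1).
  set (cmin := fix cm (n : nat) : R := match n with O => 1 | S n' => Rmin (cm n') (A n' / d^n') end).
  assert (Hcpos : forall n, 0 < cmin n).
  { induction n as [|n IH]; simpl; [lra|]. apply Rmin_glb_lt; auto.
    apply Rdiv_lt_0_compat; auto. apply pow_lt; lra. }
  assert (Hcle1 : forall n, cmin n <= 1).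
  { induction n as [|n IH]; simpl; [lra|]. pose proof (Rmin_l (cmin n) (A n / d ^ n)). lra. }
  assert (Hcsmall : forall n j, (j < n)%nat -> cmin n <= A j / d^j).
  { induction n as [|n IH]; intros j Hj; [lia|]. simpl.
    destruct (Nat.eq_dec j n) as [->|Hne].
    - apply Rmin_r.
    - eapply Rle_trans; [apply Rmin_l| apply IH; lia]. }
  exists d, (cmin K). split; auto. split; auto.
  intros j. assert (0 < d^j) by (apply pow_lt; lra).
  destruct (Nat.lt_ge_cases j K) as [Hj|Hj].
  - specialize (Hcsmall K j Hj). apply (Rmult_le_compat_r (d^j)) in Hcsmall; [|lra].
    replace (A j / d ^ j * d ^ j) with (A j) in Hcsmall by (field; lra). exact Hcsmall.
  - specialize (Hbig j Hj). pose proof (Hcle1 K). pose proof (Hcpos K). nra.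
Qed.

Lemma PA_case2 A : (forall p, 0 < A p) -> liminf_root_pos A -> alg (Ahat A) -> PA (Ahat A).
Proof.
  intros HA HL [C1 [HC1 Halg]].
  destruct (liminf_extract A HA HL) as [d [c' [Hd [Hc' Hlow]]]].
  exists (/ c'), (C1 / d). split; [apply Rinv_0_lt_compat; auto|]. split; [apply Rdiv_lt_0_compat; lra|].
  intros p j Hj.
  specialize (Halg (p - j)%nat j). replace (p - j + j)%nat with p in Halg by lia.
  unfold Ahat in *.
  pose proof (HA j). pose proof (HA (p - j)%nat). pose proof (HA p).
  pose proof (lt_0_INR _ (lt_O_fact j)). pose proof (lt_0_INR _ (lt_O_fact (p - j))).
  pose proof (lt_0_INR _ (lt_O_fact p)).
  assert (Hdp : d^p <= d^j).
  { replace p with (j + (p - j))%nat at 1 by lia. rewrite pow_add.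
    assert (0 < d^j) by (apply pow_lt; lra). assert (d^(p-j) <= 1) by (rewrite <- (pow1 (p-j)); apply pow_incr; lra).
    assert (0 <= d^(p-j)) by (apply pow_le; lra). nra. }
  assert (HAj : c' * d^p <= A j) by (pose proof (Hlow j); assert (0 < d^p) by (apply pow_lt; lra); nra).
  assert (0 < d^p) by (apply pow_lt; lra).
  assert (0 < C1^p) by (apply pow_lt; lra).
  replace (/ c' * (C1 / d) ^ p * (INR (fact p) * A p)) with (C1^p * (INR (fact p) * A p) / (c' * d^p)).
  2:{ unfold Rdiv. rewrite Rpow_mult_distr, pow_inv. field. repeat split; try lra; apply pow_nonzero; lra. }
  apply (Rmult_le_reg_r (c' * d^p)); [nra|].
  replace (C1 ^ p * (INR (fact p) * A p) / (c' * d ^ p) * (c' * d ^ p)) with (C1 ^ p * (INR (fact p) * A p)) by (field; split; lra).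
  eapply Rle_trans; [|exact Halg].
  replace (INR (fact (p - j)) * A (p - j)%nat * (INR (fact j) * A j))
    with ((INR (fact j) * (INR (fact (p - j)) * A (p - j)%nat)) * A j) by ring.
  apply Rmult_le_compat_l; [|auto]. apply Rmult_le_pos; [lra|]. nra.
Qed.

Definition psi0 (s cc : R) (phi : R -> C) : R -> C :=
  fun xi => (cc * GR phi 0 0 (s * xi) + 0 * GI phi 0 0 (s * xi),
             0 * GR phi 0 0 (s * xi) + cc * GI phi 0 0 (s * xi)).

Lemma fourier_GR phi N xi : Hyp phi N -> fourier_int phi xi (GR phi 0 0 xi, GI phi 0 0 xi).
Proof.
  intros HH. unfold fourier_int.
  pose proof (is_RInt_gen_pair _ _ _ _ (RE_gen phi N 0 0 xi HH) (IM_gen phi N 0 0 xi HH)) as H.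
  eapply (is_RInt_gen_ext (V := prod_NormedModule R_AbsRing R_NormedModule R_NormedModule)); [|exact H].
  apply filter_forall. intros ab x _.
  unfold RE, IM, d1, d2, Cmult, expi. simpl Derive_n. destruct (phi x) as [u v]. simpl. f_equal; ring.
Qed.

Lemma cmod_fst (a b : R) : Rabs a <= Cmod (a, b).
Proof. pose proof (Rmax_Cmod (a, b)). simpl in H. pose proof (Rmax_l (Rabs a) (Rabs b)). lra. Qed.
Lemma cmod_snd (a b : R) : Rabs b <= Cmod (a, b).
Proof. pose proof (Rmax_Cmod (a, b)). simpl in H. pose proof (Rmax_r (Rabs a) (Rabs b)). lra. Qed.

Lemma Hyp_of_bounded M Bq h phi C0 : 0 < C0 -> 0 < h -> (forall p, 0 < M p) -> (forall p, 0 < Bq p) ->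
  (forall j, M (S j) ^ 2 <= M j * M (S (S j))) ->
  smooth phi -> bounded_by M Bq h phi C0 -> Hyp phi (Nspec C0 h M Bq).
Proof.
  intros HC Hh HM HB Hlc Hs Hb. split; auto. split.
  - intros j m. unfold Nspec. pose proof (HM j). pose proof (HB m).
    assert (0 < h^(j+m)) by (apply pow_lt; lra).
    apply Rmult_lt_0_compat; [lra|]. repeat apply Rmult_lt_0_compat; lra.
  - split.
    + intros j m. unfold Nspec. pose proof (Hlc j). pose proof (HB m).
      replace ((2 * C0 * (h ^ (S j + m) * M (S j) * Bq m)) ^ 2) with
        ((2 * C0 * h^(S j + m) * Bq m)^2 * M (S j) ^2) by ring.
      replace (2 * C0 * (h ^ (j + m) * M j * Bq m) * (2 * C0 * (h ^ (S (S j) + m) * M (S (S j)) * Bq m)))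
        with ((2 * C0 * h^(S j + m) * Bq m)^2 * (M j * M (S (S j)))).
      2:{ simpl Nat.add. simpl pow. ring. }
      apply Rmult_le_compat_l; auto. apply pow2_ge_0.
    + intros j m x. specialize (Hb j m x). unfold cderiv in Hb. rewrite Cmult_RtoC in Hb.
      unfold ad, Nspec. fold (d1 phi m x) in Hb. fold (d2 phi m x) in Hb.
      pose proof (cmod_fst (x ^ j * d1 phi m x) (x ^ j * d2 phi m x)).
      pose proof (cmod_snd (x ^ j * d1 phi m x) (x ^ j * d2 phi m x)). lra.
Qed.

Lemma le_eps (a K C0 X : R) : (forall e, 0 < e -> a <= (K * (C0 + e)) * X) -> 0 <= K * X ->
  a <= (K * C0) * X.
Proof.
  intros H HX. destruct (Rle_dec a ((K * C0) * X)) as [|Hn]; auto. exfalso.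
  destruct (Req_dec (K * X) 0) as [E|E].
  - specialize (H 1 ltac:(lra)). replace (K * (C0 + 1) * X) with (K * C0 * X + (K * X)) in H by ring. lra.
  - assert (H' : forall e, 0 < e -> a <= K * C0 * X + e * (K * X)).
    { intros e0 He0. specialize (H e0 He0). replace (K * (C0 + e0) * X) with (K * C0 * X + e0 * (K * X)) in H by ring. exact H. }
    clear H. set (Y := K * X) in *. clearbody Y. rename H' into H.
    set (e := (a - K * C0 * X) / (2 * Y)).
    assert (He : 0 < e) by (unfold e; apply Rdiv_lt_0_compat; lra).
    specialize (H e He).
    unfold e in H. replace ((a - K * C0 * X) / (2 * Y) * Y) with ((a - K * C0 * X) / 2) in H
      by (field; exact E). lra.
Qed.

Lemma bounded_mono N B h phi C0 C1 : (forall p, 0 < N p) -> (forall p, 0 < B p) -> 0 < h ->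
  C0 <= C1 -> bounded_by N B h phi C0 -> bounded_by N B h phi C1.
Proof.
  intros HN HB Hh H01 Hb p q x. eapply Rle_trans; [apply Hb|].
  apply Rmult_le_compat_r; auto. pose proof (HN p). pose proof (HB q).
  assert (0 < h^(p+q)) by (apply pow_lt; lra).
  apply Rmult_le_pos; [|lra]. apply Rmult_le_pos; lra.
Qed.

Lemma bounded_nonneg N B h phi C0 : (forall p, 0 < N p) -> (forall p, 0 < B p) ->
  bounded_by N B h phi C0 -> 0 <= C0.
Proof.
  intros HN HB Hb. specialize (Hb 0%nat 0%nat 0). simpl in Hb.
  pose proof (Cmod_ge_0 (Cmult (RtoC 1) (cderiv phi 0 0))). pose proof (HN 0%nat). pose proof (HB 0%nat).
  assert (0 < 1 * N 0%nat * B 0%nat) by nra. nra.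
Qed.

Lemma core M Bq s cc c D a' h phi :
  (forall p, 0 < M p) -> (forall j, M (S j) ^ 2 <= M j * M (S (S j))) -> (forall p, 0 < Bq p) ->
  0 < c -> 0 < D -> (forall p j, (j <= p)%nat -> INR (fact j) * Bq (p - j)%nat <= c * D^p * Bq p) ->
  0 < a' -> (forall p q, (p <= q)%nat -> Mtilde M p <= a' * Mtilde M q) -> (forall k, 0 < Mtilde M k) ->
  s * s = 1 -> Rabs s = 1 -> Rabs cc <= 1 -> 1 <= h -> in_S M Bq h phi ->
  (exists N, Hyp phi N) /\ smooth (psi0 s cc phi) /\
  (forall C0, bounded_by M Bq h phi C0 ->
     bounded_by Bq (Mtilde M) (4 * Rmax D 1 * h) (psi0 s cc phi) (16 * c * a' * h * C0)).
Proof.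
  intros HM Hlc HB Hc HD HPA Ha HMt HMp Hs Hsa Hcc Hh [Hsm [K0 HK0]].
  assert (HK0' : bounded_by M Bq h phi (Rmax K0 1)) by (eapply bounded_mono; eauto; [lra| apply Rmax_l]).
  assert (HH : Hyp phi (Nspec (Rmax K0 1) h M Bq)).
  { apply Hyp_of_bounded; auto; [|lra]. pose proof (Rmax_r K0 1). lra. }
  split; [eexists; exact HH|]. split.
  - intros q x. split.
    + exact (proj2 (G_Dn phi _ 0 0 s q cc 0 HH Hs x)).
    + exact (proj2 (G_Dn phi _ 0 0 s q 0 cc HH Hs x)).
  - intros C0 Hb p q x.
    pose proof (bounded_nonneg _ _ _ _ _ HM HB Hb) as HC0.
    apply le_eps.
    + intros e He.
      assert (Hb' : bounded_by M Bq h phi (C0 + e)) by (eapply bounded_mono; eauto; lra).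
      assert (HHe : Hyp phi (Nspec (C0 + e) h M Bq)) by (apply Hyp_of_bounded; auto; lra).
      pose proof (final_bound phi _ s cc 0 0 cc p q x HHe Hs Hsa) as F.
      pose proof (Lsum_final (C0 + e) h M Bq c D a' p q ltac:(lra) Hh HM HB Hc HD HPA Ha HMt HMp) as L.
      destruct (Gpow phi _ p HHe q 0 (s * x)) as [G _].
      pose proof (Rabs_pos ((s * x) ^ p * GR phi q 0 (s * x))).
      rewrite Rabs_R0 in F.
      unfold cderiv. eapply Rle_trans; [exact F|].
      eapply Rle_trans; [|exact L]. apply Rmult_le_compat_r; lra.
    + pose proof (HB p). pose proof (HMp q).
      assert (0 < (4 * Rmax D 1 * h) ^ (p + q)).
      { apply pow_lt. pose proof (Rmax_r D 1). nra. }
      assert (0 <= 16 * c * a' * h) by (apply Rmult_le_pos; [|lra]; apply Rmult_le_pos; [|lra]; apply Rmult_le_pos; lra).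
      apply Rmult_le_pos; auto. apply Rmult_le_pos; [|lra]. apply Rmult_le_pos; lra.
Qed.

Lemma bounded_h_mono N B h h' phi C0 : (forall p, 0 < N p) -> (forall p, 0 < B p) -> 0 < h -> h <= h' ->
  0 <= C0 -> bounded_by N B h phi C0 -> bounded_by N B h' phi C0.
Proof.
  intros HN HB Hh Hhh HC Hb p q x. eapply Rle_trans; [apply Hb|].
  apply Rmult_le_compat_l; auto. pose proof (HN p). pose proof (HB q).
  apply Rmult_le_compat_r; [lra|]. apply Rmult_le_compat_r; [lra|].
  apply pow_incr; lra.
Qed.

Lemma assemble (T : (R -> C) -> (R -> C) -> Prop) M Bq s cc c D a' :
  (forall p, 0 < M p) -> (forall j, M (S j) ^ 2 <= M j * M (S (S j))) -> (forall p, 0 < Bq p) ->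
  0 < c -> 0 < D -> (forall p j, (j <= p)%nat -> INR (fact j) * Bq (p - j)%nat <= c * D^p * Bq p) ->
  0 < a' -> (forall p q, (p <= q)%nat -> Mtilde M p <= a' * Mtilde M q) -> (forall k, 0 < Mtilde M k) ->
  s * s = 1 -> Rabs s = 1 -> Rabs cc <= 1 ->
  (forall phi N, Hyp phi N -> T phi (psi0 s cc phi)) ->
  maps_continuously_LB T M Bq Bq (Mtilde M) /\ maps_continuously_banach T M Bq Bq (Mtilde M).
Proof.
  intros HM Hlc HB Hc HD HPA Ha HMt HMp Hs Hsa Hcc HT.
  set (E := 4 * Rmax D 1).
  assert (HE : 0 < E) by (unfold E; pose proof (Rmax_r D 1); lra).
  assert (BAN : forall h, 1 <= h -> forall phi, in_S M Bq h phi ->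
     T phi (psi0 s cc phi) /\ in_S Bq (Mtilde M) (E * h) (psi0 s cc phi) /\
     forall C0, bounded_by M Bq h phi C0 -> bounded_by Bq (Mtilde M) (E * h) (psi0 s cc phi) (16 * c * a' * h * C0)).
  { intros h Hh phi Hphi.
    destruct (core M Bq s cc c D a' h phi HM Hlc HB Hc HD HPA Ha HMt HMp Hs Hsa Hcc Hh Hphi) as [[N HN] [Hsm Hbd]].
    split; [eapply HT; eauto|]. split.
    + split; [exact Hsm|]. destruct Hphi as [_ [K0 HK0]]. exists (16 * c * a' * h * K0).
      apply Hbd. exact HK0.
    + intros C0 HC0. apply Hbd. exact HC0. }
  assert (HK : forall h, 1 <= h -> 0 <= 16 * c * a' * h).
  { intros h Hh. apply Rmult_le_pos; [|lra]. apply Rmult_le_pos; [|lra]. apply Rmult_le_pos; lra. }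
  assert (LB2 : forall h, 0 < h -> exists k K, 0 < k /\ 0 <= K /\
     forall phi, in_S M Bq h phi ->
       exists psi, T phi psi /\ in_S Bq (Mtilde M) k psi /\
         forall C0, bounded_by M Bq h phi C0 -> bounded_by Bq (Mtilde M) k psi (K * C0)).
  { intros h Hh. set (h' := Rmax h 1).
    assert (Hh1 : 1 <= h') by apply Rmax_r. assert (Hhh : h <= h') by apply Rmax_l.
    exists (E * h'), (16 * c * a' * h'). split; [nra|]. split; [apply HK; auto|].
    intros phi [Hsm [K0 HK0]].
    assert (HK0' : bounded_by M Bq h' phi K0).
    { apply (bounded_h_mono M Bq h); auto; try lra. exact (bounded_nonneg _ _ _ _ _ HM HB HK0). }
    destruct (BAN h' Hh1 phi (conj Hsm (ex_intro _ K0 HK0'))) as [HT1 [Hin Hbd]].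
    exists (psi0 s cc phi). split; auto. split; auto.
    intros C0 HC0. apply Hbd. apply (bounded_h_mono M Bq h); auto; try lra. exact (bounded_nonneg _ _ _ _ _ HM HB HC0). }
  split.
  - split; auto.
    intros phi [h [Hh Hin]]. destruct (LB2 h Hh) as [k [K [Hk [_ HL]]]].
    destruct (HL phi Hin) as [psi [HT1 [Hin' _]]]. exists psi. split; auto. exists k. split; auto.
  - exists E. split; auto. intros h Hh. exists (16 * c * a' * h). split; [apply HK; auto|].
    intros phi Hphi. exists (psi0 s cc phi). apply BAN; auto.
Qed.

Theorem proposition4p2 (M A : nat -> R) :
  weight_sequence M ->
  almost_increasing (Mtilde M) ->
  (forall p, 0 < A p) ->
  (almost_increasing A \/ (liminf_root_pos A /\ alg (Ahat A))) ->
  (maps_continuously_LB is_fourier M (Ahat A) (Ahat A) (Mtilde M) /\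
   maps_continuously_banach is_fourier M (Ahat A) (Ahat A) (Mtilde M)) /\
  (maps_continuously_LB is_inv_fourier M (Ahat A) (Ahat A) (Mtilde M) /\
   maps_continuously_banach is_inv_fourier M (Ahat A) (Ahat A) (Mtilde M)).
Proof.
  intros HW HMt HA Hcase.
  destruct HW as [HM [_ [Hlc0 _]]].
  assert (Hlc : forall j, M (S j) ^ 2 <= M j * M (S (S j))).
  { intros j. specialize (Hlc0 (S j) ltac:(lia)). replace (S j - 1)%nat with j in Hlc0 by lia. exact Hlc0. }
  assert (HMp : forall k, 0 < Mtilde M k).
  { intros k. rewrite Mtilde_eq by auto.
    pose proof (HM k). pose proof (HM (S k)). pose proof (HM (S (S k))). pose proof (Hlc k).
    assert (1 <= M k * M (S (S k)) / M (S k) ^ 2).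
    { apply (Rmult_le_reg_r (M (S k) ^ 2)); [apply pow_lt; lra|].
      replace (M k * M (S (S k)) / M (S k) ^ 2 * M (S k) ^ 2) with (M k * M (S (S k))) by (field; lra). lra. }
    assert (0 <= ln (M k * M (S (S k)) / M (S k) ^ 2)) by (rewrite <- ln_1; apply ln_le; lra).
    apply Rmult_lt_0_compat; lra. }
  destruct HMt as [a' [Ha' HMt']].
  assert (HB : forall p, 0 < Ahat A p).
  { intros p. unfold Ahat. apply Rmult_lt_0_compat; auto. apply lt_0_INR, lt_O_fact. }
  assert (HPA : PA (Ahat A)).
  { destruct Hcase as [H1 | [H1 H2]]; [apply PA_case1; auto| apply PA_case2; auto]. }
  destruct HPA as [c [D [Hc [HD HPA]]]].
  split.
  - apply (assemble is_fourier M (Ahat A) 1 1 c D a'); auto; try lra; try (rewrite Rabs_R1; lra).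
    intros phi N HH xi. unfold psi0.
    replace (1 * xi) with xi by ring.
    rewrite !Rmult_1_l, !Rmult_0_l, Rplus_0_r, Rplus_0_l.
    apply (fourier_GR phi N xi HH).
  - assert (HPI : 2 < PI) by (pose proof PI2_1; lra).
    apply (assemble is_inv_fourier M (Ahat A) (-1) (/ (2 * PI)) c D a'); auto; try lra.
    + rewrite Rabs_left by lra; lra.
    + rewrite Rabs_pos_eq by (apply Rlt_le, Rinv_0_lt_compat; lra).
      rewrite <- Rinv_1. apply Rinv_le_contravar; lra.
    + intros phi N HH xi. exists (GR phi 0 0 (- xi), GI phi 0 0 (- xi)). split.
      * apply (fourier_GR phi N (- xi) HH).
      * unfold psi0. rewrite Cmult_RtoC. replace (-1 * xi) with (- xi) by ring.
        rewrite !Rmult_0_l, Rplus_0_r, Rplus_0_l. reflexivity.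
Qed.
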